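(* Let $p=\alpha(\alpha+1)>2$, $c_p=\frac{1+z_p}{1-z_p}$, $a_p=h_{c_p}'(z_p)/L_\alpha'(z_p)$, and $$g_p(s)=\begin{cases}a_pL_\alpha(s),& s\in[z_p,1],\\ h_{c_p}(s),& s\in[-1,z_p].\end{cases}$$ Then $g_p$ is $C^1$ on $[-1,1]$, $g_p\ge h_{c_p}$, and for $s\in(-1,1)\setminus\{z_p\}$: $$Dg_p(s):=(1-s^2)g_p''-2sg_p'+pg_p\le0,\qquad \frac{Dg_p(s)}{1-s^2}+Kg_p(s)\le0,$$ where $Kg=p(p-1)g-2(p-1)sg'-(1-s^2)g''$. Consequently, the function $\phi(x,y)=(x+y)^p g_p\big(\frac{y-x}{x+y}\big)$ satisfies $\phi(x,y)\ge y^p-c_p^px^p$ for $x,y\ge0$, $(x,y)\ne(0,0)$, and for all $x,y>0$ with $\frac{y-x}{x+y}\ne z_p$ and all vectors $h,k\in\mathbb R^2$ with $|k|\le|h|$: $$\Big(\frac1x\phi_x+\phi_{xx}\Big)|h|^2+2\phi_{xy}\,(h\cdot k)+\Big(\phi_{yy}+\frac1y\phi_y\Big)|k|^2\le0 .$$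
   Context: $L_\alpha$ is the solution on $(-1,1)$ of $(1-s^2)y''-2sy'+\alpha(\alpha+1)y=0$ bounded near $1$ with $L_\alpha(1)=1$; $z_p$ is its largest zero in $(-1,1)$; $h_c(s)=\big(\frac{1+s}{2}\big)^p-c^p\big(\frac{1-s}{2}\big)^p$. *)

(* Defs.v *)
From Stdlib Require Import Reals Lra.
Open Scope R_scope.

(* real power x^y for x >= 0, with the convention 0^y = 0 (y > 0 throughout) *)
Definition pw (x y : R) : R := if Rle_dec x 0 then 0 else Rpower x y.

Definition hc (p c s : R) : R := pw ((1 + s) / 2) p - pw c p * pw ((1 - s) / 2) p.

Definition gp (p c a z : R) (L : R -> R) (s : R) : R :=
  if Rle_dec z s then a * L s else hc p c s.

Definition phi (p : R) (g : R -> R) (x y : R) : R := pw (x + y) p * g ((y - x) / (x + y)).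

Definition deriv_within (D : R -> Prop) (f : R -> R) (x l : R) : Prop :=
  forall eps, 0 < eps -> exists delta, 0 < delta /\
    forall y, D y -> y <> x -> Rabs (y - x) < delta ->
      Rabs ((f y - f x) / (y - x) - l) < eps.

Definition cont_within (D : R -> Prop) (f : R -> R) (x : R) : Prop :=
  forall eps, 0 < eps -> exists delta, 0 < delta /\
    forall y, D y -> Rabs (y - x) < delta -> Rabs (f y - f x) < eps.

Definition C1_on (a b : R) (f : R -> R) : Prop :=
  exists f1 : R -> R,
    (forall x, a <= x <= b -> deriv_within (fun y => a <= y <= b) f x (f1 x)) /\
    (forall x, a <= x <= b -> cont_within (fun y => a <= y <= b) f1 x).

Definition twice_deriv_at (f : R -> R) (x d1 d2 : R) : Prop :=
  exists (f1 : R -> R) (delta : R), 0 < delta /\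
    (forall y, Rabs (y - x) < delta -> derivable_pt_lim f y (f1 y)) /\
    f1 x = d1 /\ derivable_pt_lim f1 x d2.

Definition Dop (p s g0 d1 d2 : R) : R := (1 - s ^ 2) * d2 - 2 * s * d1 + p * g0.
Definition Kop (p s g0 d1 d2 : R) : R :=
  p * (p - 1) * g0 - 2 * (p - 1) * s * d1 - (1 - s ^ 2) * d2.

Definition second_partials (F : R -> R -> R) (x y fx fy fxx fxy fyy : R) : Prop :=
  exists (px py : R -> R -> R) (delta : R), 0 < delta /\
    (forall a b, Rabs (a - x) < delta -> Rabs (b - y) < delta ->
       derivable_pt_lim (fun t => F t b) a (px a b) /\
       derivable_pt_lim (fun t => F a t) b (py a b)) /\
    px x y = fx /\ py x y = fy /\
    derivable_pt_lim (fun t => px t y) x fxx /\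
    derivable_pt_lim (fun t => px x t) y fxy /\
    derivable_pt_lim (fun t => py x t) y fyy.

(* Main.v *)
Require Import Defs.
From Stdlib Require Import Reals Lra Psatz.
Open Scope R_scope.


Lemma dpl_eq f x l l' : derivable_pt_lim f x l -> l = l' -> derivable_pt_lim f x l'.
Proof. intros H ->; exact H. Qed.

Lemma dpl_mul f g x l1 l2 : derivable_pt_lim f x l1 -> derivable_pt_lim g x l2 ->
  derivable_pt_lim (fun y => f y * g y) x (l1 * g x + f x * l2).
Proof. intros; apply (derivable_pt_lim_mult f g); auto. Qed.
Lemma dpl_add f g x l1 l2 : derivable_pt_lim f x l1 -> derivable_pt_lim g x l2 ->
  derivable_pt_lim (fun y => f y + g y) x (l1 + l2).
Proof. intros; apply (derivable_pt_lim_plus f g); auto. Qed.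
Lemma dpl_sub f g x l1 l2 : derivable_pt_lim f x l1 -> derivable_pt_lim g x l2 ->
  derivable_pt_lim (fun y => f y - g y) x (l1 - l2).
Proof. intros; apply (derivable_pt_lim_minus f g); auto. Qed.
Lemma dpl_const k x : derivable_pt_lim (fun _ => k) x 0.
Proof. apply derivable_pt_lim_const. Qed.
Lemma dpl_id x : derivable_pt_lim (fun y => y) x 1.
Proof. apply derivable_pt_lim_id. Qed.
Lemma dpl_scal k f x l : derivable_pt_lim f x l -> derivable_pt_lim (fun y => k * f y) x (k * l).
Proof. intros H. eapply dpl_eq. apply (dpl_mul (fun _ => k) f). apply dpl_const. exact H. ring. Qed.
Lemma dpl_comp f g x l1 l2 : derivable_pt_lim g x l1 -> derivable_pt_lim f (g x) l2 ->
  derivable_pt_lim (fun y => f (g y)) x (l2 * l1).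
Proof. intros; apply (derivable_pt_lim_comp g f); auto. Qed.
Lemma dpl_sq x : derivable_pt_lim (fun y => y ^ 2) x (2 * x).
Proof. eapply dpl_eq. apply (derivable_pt_lim_pow x 2). simpl; ring. Qed.
Lemma dpl_1ms2 x : derivable_pt_lim (fun y => 1 - y ^ 2) x (- 2 * x).
Proof. eapply dpl_eq. apply dpl_sub. apply dpl_const. apply dpl_sq. ring. Qed.

Lemma dpl_ext f g x l d : 0 < d -> (forall y, Rabs (y - x) < d -> f y = g y) ->
  derivable_pt_lim f x l -> derivable_pt_lim g x l.
Proof.
  intros Hd Hfg H eps He. destruct (H eps He) as [del Hdel].
  assert (Hm : 0 < Rmin del d) by (apply Rmin_pos; [apply cond_pos|lra]).
  exists (mkposreal _ Hm). intros h Hh Hlt. simpl in Hlt.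
  assert (Hlt1 : Rabs h < del) by (eapply Rlt_le_trans; [exact Hlt| apply Rmin_l]).
  assert (Hlt2 : Rabs h < d) by (eapply Rlt_le_trans; [exact Hlt| apply Rmin_r]).
  rewrite <- (Hfg (x + h)), <- (Hfg x). apply Hdel; auto.
  replace (x - x) with 0 by ring. rewrite Rabs_R0; lra.
  replace (x + h - x) with h by ring. exact Hlt2.
Qed.

Lemma dpl_cont f x l : derivable_pt_lim f x l -> forall eps, 0 < eps ->
  exists d, 0 < d /\ forall y, Rabs (y - x) < d -> Rabs (f y - f x) < eps.
Proof.
  intros H eps He.
  assert (Hc : continuity_pt f x) by (apply derivable_continuous_pt; exists l; exact H).
  destruct (Hc eps He) as [a [Ha Hd]].
  exists a; split; auto. intros y Hy.
  destruct (Req_dec y x) as [->|Hne]. replace (f x - f x) with 0 by ring; rewrite Rabs_R0; lra.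
  apply (Hd y). split. unfold D_x, no_cond; split; auto. simpl; unfold Rdist. exact Hy.
Qed.

Definition tends0 (F : R -> R) : Prop := forall eps, 0 < eps -> exists d, 0 < d /\
  forall t, 1 - d < t < 1 -> Rabs (F t) < eps.

Lemma nonneg_of_decr F F' s : s < 1 ->
  (forall t, s <= t < 1 -> derivable_pt_lim F t (F' t)) ->
  (forall t, s < t < 1 -> F' t <= 0) -> tends0 F -> 0 <= F s.
Proof.
  intros Hs Hd Hneg Ht. destruct (Rle_or_lt 0 (F s)) as [|Hlt]; auto. exfalso.
  destruct (Ht (- F s)) as [d [Hd0 Hdd]]; [lra|].
  set (t := (Rmax s (1 - d) + 1) / 2).
  assert (H1 : s <= Rmax s (1-d)) by apply Rmax_l.
  assert (H2 : 1 - d <= Rmax s (1-d)) by apply Rmax_r.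
  assert (H3 : Rmax s (1-d) < 1) by (apply Rmax_lub_lt; lra).
  assert (Hst : s < t) by (unfold t; lra).
  destruct (MVT_cor2 F F' s t Hst) as [c [Hc Hcb]].
  { intros c Hc. apply Hd. unfold t in *; lra. }
  assert (F' c <= 0) by (apply Hneg; unfold t in *; lra).
  assert (Rabs (F t) < - F s) by (apply Hdd; unfold t in *; lra).
  assert (F t - F s <= 0). { rewrite Hc. assert (0 < t - s) by lra. nra. }
  apply Rabs_def2 in H0. lra.
Qed.

Lemma pos_of_sdecr F F' s : s < 1 ->
  (forall t, s <= t < 1 -> derivable_pt_lim F t (F' t)) ->
  (forall t, s < t < 1 -> F' t < 0) -> tends0 F -> 0 < F s.
Proof.
  intros Hs Hd Hneg Ht.
  set (t := (s + 1) / 2).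
  assert (0 <= F t).
  { apply (nonneg_of_decr F F'). unfold t; lra. intros; apply Hd; unfold t in *; lra.
    intros; left; apply Hneg; unfold t in *; lra. auto. }
  destruct (MVT_cor2 F F' s t) as [c [Hc Hcb]]. unfold t; lra.
  { intros c Hc. apply Hd. unfold t in *; lra. }
  assert (F' c < 0) by (apply Hneg; unfold t in *; lra).
  assert (0 < t - s) by (unfold t; lra). nra.
Qed.

Lemma abs_le x a : Rabs x <= a -> - a <= x <= a.
Proof. unfold Rabs; destruct (Rcase_abs x); lra. Qed.
Lemma abs_lt x a : Rabs x < a -> - a < x < a.
Proof. unfold Rabs; destruct (Rcase_abs x); lra. Qed.
Lemma abs_le_i x a : - a <= x <= a -> Rabs x <= a.
Proof. unfold Rabs; destruct (Rcase_abs x); lra. Qed.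
Lemma abs_lt_i x a : - a < x < a -> Rabs x < a.
Proof. unfold Rabs; destruct (Rcase_abs x); lra. Qed.

Lemma t0_add F G : tends0 F -> tends0 G -> tends0 (fun s => F s + G s).
Proof.
  intros HF HG eps He. destruct (HF (eps/2)) as [d1 [H1 H1']]; [lra|].
  destruct (HG (eps/2)) as [d2 [H2 H2']]; [lra|].
  exists (Rmin d1 d2). split. apply Rmin_pos; lra. intros t Ht.
  pose proof (Rmin_l d1 d2). pose proof (Rmin_r d1 d2).
  eapply Rle_lt_trans. apply Rabs_triang.
  assert (Rabs (F t) < eps/2) by (apply H1'; lra).
  assert (Rabs (G t) < eps/2) by (apply H2'; lra). lra.
Qed.

Lemma t0_bmul a F K d : 0 < d -> (forall s, 1 - d < s < 1 -> Rabs (a s) <= K) ->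
  tends0 F -> tends0 (fun s => a s * F s).
Proof.
  intros Hd Ha HF eps He.
  assert (HK : 0 < Rabs K + 1) by (pose proof (Rabs_pos K); lra).
  destruct (HF (eps / (Rabs K + 1))) as [d1 [H1 H1']]. apply Rdiv_lt_0_compat; lra.
  exists (Rmin d d1). split. apply Rmin_pos; lra. intros t Ht.
  pose proof (Rmin_l d d1). pose proof (Rmin_r d d1).
  rewrite Rabs_mult.
  assert (A : Rabs (a t) <= Rabs K + 1) by (eapply Rle_trans; [apply Ha; lra|]; pose proof (Rle_abs K); lra).
  assert (B : Rabs (F t) < eps / (Rabs K + 1)) by (apply H1'; lra).
  assert (Rabs (a t) * Rabs (F t) <= (Rabs K + 1) * Rabs (F t)) by (apply Rmult_le_compat_r; [apply Rabs_pos|auto]).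
  assert ((Rabs K + 1) * Rabs (F t) < (Rabs K + 1) * (eps / (Rabs K + 1))) by (apply Rmult_lt_compat_l; auto).
  assert ((Rabs K + 1) * (eps / (Rabs K + 1)) = eps) by (field; lra). lra.
Qed.

Lemma t0_1ms2 : tends0 (fun s => 1 - s ^ 2).
Proof.
  intros eps He. exists (Rmin 1 (eps / 2)). split. apply Rmin_pos; lra. intros t Ht.
  pose proof (Rmin_l 1 (eps/2)). pose proof (Rmin_r 1 (eps/2)).
  apply abs_lt_i. split; nra.
Qed.

Lemma t0_ext F G : tends0 F -> (forall s, 0 < s < 1 -> F s = G s) -> tends0 G.
Proof.
  intros HF Hfg eps He. destruct (HF eps He) as [d [Hd Hd']].
  exists (Rmin d 1). split. apply Rmin_pos; lra. intros t Ht.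
  pose proof (Rmin_l d 1). pose proof (Rmin_r d 1).
  rewrite <- Hfg by lra. apply Hd'; lra.
Qed.

Lemma dpl_opp f x l : derivable_pt_lim f x l -> derivable_pt_lim (fun y => - f y) x (- l).
Proof. intros; apply (derivable_pt_lim_opp f); auto. Qed.

Lemma dpl_fext f g x l : (forall y, f y = g y) -> derivable_pt_lim f x l -> derivable_pt_lim g x l.
Proof. intros Hfg H. apply (dpl_ext f g x l 1); auto; lra. Qed.

Lemma Rmult_le_0_r a b : a <= 0 -> 0 <= b -> a * b <= 0.
Proof. intros; nra. Qed.
Lemma Rmult_le_0_l a b : 0 <= a -> b <= 0 -> a * b <= 0.
Proof. intros; nra. Qed.


Record LH (p z : R) (L L1 L2 : R -> R) : Prop := {
 lh_p : 2 < p;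
 lh_d1 : forall s, -1 < s < 1 -> derivable_pt_lim L s (L1 s);
 lh_d2 : forall s, -1 < s < 1 -> derivable_pt_lim L1 s (L2 s);
 lh_ode : forall s, -1 < s < 1 -> (1 - s ^ 2) * L2 s - 2 * s * L1 s + p * L s = 0;
 lh_lim : forall eps, 0 < eps -> exists delta, 0 < delta /\
            forall s, 1 - delta < s < 1 -> Rabs (L s - 1) < eps;
 lh_1 : L 1 = 1;
 lh_z : -1 < z < 1; lh_Lz : L z = 0;
 lh_zmax : forall s, z < s < 1 -> L s <> 0 }.

Lemma le_eps a b : (forall e, 0 < e -> a <= b + e) -> a <= b.
Proof. intros H. destruct (Rle_or_lt a b); auto. specialize (H ((a-b)/2)). lra. Qed.


Lemma W_d p z L L1 L2 (H : LH p z L L1 L2) s : -1 < s < 1 ->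
  derivable_pt_lim (fun s => (1 - s ^ 2) * L1 s) s (- p * L s).
Proof.
  intros Hs. eapply dpl_eq. apply dpl_mul. apply dpl_1ms2. apply (lh_d2 _ _ _ _ _ H s Hs).
  pose proof (lh_ode _ _ _ _ _ H s Hs). lra.
Qed.

Lemma L_bnd p z L L1 L2 (H : LH p z L L1 L2) : exists d, 0 < d /\ d < 1 /\
  forall s, 1 - d < s < 1 -> Rabs (L s) < 2.
Proof.
  destruct (lh_lim _ _ _ _ _ H 1) as [d [Hd Hs]]; [lra|].
  exists (Rmin d (1/2)). split; [apply Rmin_pos; lra|]. split. pose proof (Rmin_r d (1/2)); lra.
  intros s Hs'. assert (1 - d < s < 1) by (pose proof (Rmin_l d (1/2)); lra).
  specialize (Hs s H0). apply Rabs_def2 in Hs. apply Rabs_def1; lra.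
Qed.

Lemma blowup_contra f f1 t e : 0 < e -> -1 < t < 1 ->
  (forall x, t <= x < 1 -> derivable_pt_lim f x (f1 x)) ->
  (forall x, t <= x < 1 -> e <= (1 - x ^ 2) * f1 x) ->
  (forall x, t <= x < 1 -> Rabs (f x - f t) < e / 8) -> False.
Proof.
  intros He Ht Hd Hb Hc.
  set (t2 := (t + 1) / 2).
  destruct (MVT_cor2 f f1 t t2) as [c [Hc1 Hc2]]. unfold t2; lra.
  { intros c Hc0; apply Hd; unfold t2 in *; lra. }
  assert (Hfc : Rabs (f t2 - f t) < e / 8) by (apply Hc; unfold t2; lra).
  assert (Hbc : e <= (1 - c ^ 2) * f1 c) by (apply Hb; unfold t2 in *; lra).
  assert (0 < 1 - c) by (unfold t2 in *; lra).
  assert (0 < 1 + c) by lra.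
  assert (0 <= f1 c). { destruct (Rle_or_lt 0 (f1 c)) as [Hq|Hq]; [exact Hq|]. assert (0 < 1 - c ^ 2) by nra. assert ((1 - c^2) * f1 c < 0) by (apply Rmult_pos_neg; lra). lra. }
  assert (H2 : e <= 2 * (1 - c) * f1 c) by nra.
  assert (H3 : (1 - c) * f1 c <= (1 - t) * f1 c) by (apply Rmult_le_compat_r; lra).
  assert (f1 c * (t2 - t) >= e / 8) by (unfold t2; nra).
  apply Rabs_def2 in Hfc. lra.
Qed.

Lemma W_lip p z L L1 L2 (H : LH p z L L1 L2) d0 : d0 < 1 ->
  (forall s, 1 - d0 < s < 1 -> Rabs (L s) < 2) ->
  forall t x, 1 - d0 < t -> t <= x < 1 ->
  Rabs ((1 - x ^ 2) * L1 x - (1 - t ^ 2) * L1 t) <= 2 * p * (x - t).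
Proof.
  intros Hd0 Hb t x Ht Hx. pose proof (lh_p _ _ _ _ _ H).
  destruct (Req_dec t x) as [<-|Hne].
  replace (_ - _) with 0 by ring. rewrite Rabs_R0. lra.
  destruct (MVT_cor2 (fun s => (1 - s ^ 2) * L1 s) (fun s => - p * L s) t x) as [c [Hc Hc2]]. lra.
  intros c Hc. apply (W_d _ _ _ _ _ H). lra.
  rewrite Hc. rewrite Rabs_mult. rewrite (Rabs_right (x - t)) by lra.
  apply Rmult_le_compat_r. lra. rewrite Rabs_mult. rewrite Rabs_Ropp, Rabs_right by lra.
  assert (Rabs (L c) < 2) by (apply Hb; lra). nra.
Qed.

Lemma W_t0 p z L L1 L2 (H : LH p z L L1 L2) : tends0 (fun s => (1 - s ^ 2) * L1 s).
Proof.
  intros eps Heps. pose proof (lh_p _ _ _ _ _ H) as Hp.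
  destruct (L_bnd _ _ _ _ _ H) as [d0 [Hd0 [Hd01 Hb]]].
  destruct (lh_lim _ _ _ _ _ H (eps/64)) as [d1 [Hd1 Hl]]; [lra|].
  set (d := Rmin (Rmin d0 d1) (eps / (4 * p))).
  assert (Hdp : 0 < d) by (apply Rmin_pos; [apply Rmin_pos|]; try lra; apply Rdiv_lt_0_compat; lra).
  assert (Hdd0 : d <= d0) by (unfold d; eapply Rle_trans; [apply Rmin_l| apply Rmin_l]).
  assert (Hdd1 : d <= d1) by (unfold d; eapply Rle_trans; [apply Rmin_l| apply Rmin_r]).
  assert (Hde : d <= eps / (4 * p)) by (unfold d; apply Rmin_r).
  exists d. split; auto. intros t Ht.
  destruct (Rlt_or_le (Rabs ((1 - t ^ 2) * L1 t)) eps) as [|Hge]; auto. exfalso.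
  assert (Hlip : forall x, t <= x < 1 -> Rabs ((1 - x ^ 2) * L1 x - (1 - t ^ 2) * L1 t) < eps / 2).
  { intros x Hx. eapply Rle_lt_trans. apply (W_lip _ _ _ _ _ H d0); auto; lra.
    assert (2 * p * (x - t) < 2 * p * d) by (apply Rmult_lt_compat_l; lra).
    assert (2 * p * d <= 2 * p * (eps / (4 * p))) by (apply Rmult_le_compat_l; lra).
    assert (2 * p * (eps / (4 * p)) = eps / 2) by (field; lra). lra. }
  assert (Hc : forall x, t <= x < 1 -> Rabs (L x - L t) < eps / 2 / 8).
  { intros x Hx. assert (A1 : Rabs (L x - 1) < eps / 64) by (apply Hl; lra).
    assert (A2 : Rabs (L t - 1) < eps / 64) by (apply Hl; lra).
    apply Rabs_def2 in A1. apply Rabs_def2 in A2. apply Rabs_def1; lra. }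
  assert (Ht1 : -1 < t < 1) by lra.
  destruct (Rle_or_lt 0 ((1 - t ^ 2) * L1 t)) as [Hpos|Hneg].
  - rewrite Rabs_right in Hge by lra.
    apply (blowup_contra L L1 t (eps / 2)); auto; try lra.
    intros x Hx. apply (lh_d1 _ _ _ _ _ H). lra.
    intros x Hx. specialize (Hlip x Hx). apply Rabs_def2 in Hlip. lra.
  - rewrite Rabs_left in Hge by lra.
    apply (blowup_contra (fun x => -1 * L x) (fun x => -1 * L1 x) t (eps / 2)); auto; try lra.
    intros x Hx. apply dpl_scal. apply (lh_d1 _ _ _ _ _ H). lra.
    intros x Hx. specialize (Hlip x Hx). apply Rabs_def2 in Hlip. lra.
    intros x Hx. specialize (Hc x Hx).
    replace (-1 * L x - -1 * L t) with (- (L x - L t)) by ring. rewrite Rabs_Ropp. exact Hc.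
Qed.

Lemma quot_bound f f1 v l e d y : 0 < d -> 0 <= e ->
  (forall x, 1 - d < x < 1 -> derivable_pt_lim f x (f1 x)) ->
  (forall x, 1 - d < x < 1 -> Rabs (f1 x - l) <= e) ->
  tends0 (fun t => f t - v) -> 1 - d < y < 1 ->
  Rabs (v - f y - l * (1 - y)) <= e * (1 - y).
Proof.
  intros Hd He Hder Hf1 Ht Hy. apply le_eps. intros zeta Hz.
  destruct (Ht (zeta / 2)) as [d2 [Hd2 Hd2']]; [lra|].
  set (t0 := Rmax y (1 - d2)).
  set (t1 := Rmax t0 (1 - zeta / (2 * (Rabs l + 1)))).
  set (t := (t1 + 1) / 2).
  assert (Ht0 : y <= t0 /\ 1 - d2 <= t0) by (split; [apply Rmax_l|apply Rmax_r]).
  assert (Ht1 : t0 <= t1 /\ 1 - zeta / (2 * (Rabs l + 1)) <= t1) by (split; [apply Rmax_l|apply Rmax_r]).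
  assert (Hl0 : 0 <= Rabs l) by apply Rabs_pos.
  assert (Hzz : 0 < zeta / (2 * (Rabs l + 1))) by (apply Rdiv_lt_0_compat; lra).
  assert (Ht1' : t1 < 1) by (unfold t1; apply Rmax_lub_lt; [unfold t0; apply Rmax_lub_lt|]; lra).
  assert (Hyt : y < t) by (unfold t; lra).
  destruct (MVT_cor2 f f1 y t Hyt) as [c [Hc Hc2]].
  { intros c Hc. apply Hder. unfold t in *; lra. }
  assert (A1 : Rabs (f t - v) < zeta / 2) by (apply Hd2'; unfold t; lra).
  assert (A2 : Rabs (f1 c - l) <= e) by (apply Hf1; unfold t in *; lra).
  assert (A3 : Rabs l * (1 - t) <= zeta / 2).
  { assert (1 - t <= zeta / (2 * (Rabs l + 1))) by (unfold t; lra).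
    assert (Rabs l * (1 - t) <= (Rabs l + 1) * (zeta / (2 * (Rabs l + 1)))).
    { apply Rmult_le_compat; try lra. unfold t; lra. }
    assert ((Rabs l + 1) * (zeta / (2 * (Rabs l + 1))) = zeta / 2) by (field; lra). lra. }
  replace (v - f y - l * (1 - y)) with ((v - f t) + (f1 c - l) * (t - y) - l * (1 - t)) by (assert (Hfy : f y = f t - f1 c * (t - y)) by lra; rewrite Hfy; ring).
  eapply Rle_trans. unfold Rminus at 1. apply Rabs_triang. rewrite Rabs_Ropp.
  eapply Rle_trans. apply Rplus_le_compat_r. apply Rabs_triang.
  rewrite Rabs_mult, (Rabs_mult l), (Rabs_right (t - y)) by lra. rewrite (Rabs_right (1 - t)) by (unfold t; lra).
  replace (v - f t) with (- (f t - v)) by ring. rewrite Rabs_Ropp.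
  assert (Rabs (f1 c - l) * (t - y) <= e * (1 - y)).
  { apply Rmult_le_compat; try lra. apply Rabs_pos. unfold t; lra. }
  lra.
Qed.

Lemma L1_lim p z L L1 L2 (H : LH p z L L1 L2) : forall eps, 0 < eps ->
  exists d, 0 < d /\ forall y, 1 - d < y < 1 -> Rabs (L1 y - p / 2) < eps.
Proof.
  intros eps Heps. pose proof (lh_p _ _ _ _ _ H) as Hp.
  set (eta := eps / (4 * p)).
  assert (Heta : 0 < eta) by (unfold eta; apply Rdiv_lt_0_compat; lra).
  destruct (lh_lim _ _ _ _ _ H eta Heta) as [d1 [Hd1 Hl]].
  set (d := Rmin (Rmin d1 (1/2)) (eps / (2 * p))).
  assert (Hdp : 0 < d) by (apply Rmin_pos; [apply Rmin_pos|]; try lra; apply Rdiv_lt_0_compat; lra).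
  assert (Hdd1 : d <= d1) by (unfold d; eapply Rle_trans; [apply Rmin_l| apply Rmin_l]).
  assert (Hdd2 : d <= 1/2) by (unfold d; eapply Rle_trans; [apply Rmin_l| apply Rmin_r]).
  assert (Hde : d <= eps / (2 * p)) by (unfold d; apply Rmin_r).
  exists d. split; auto. intros y Hy.
  assert (B : Rabs (0 - (1 - y ^ 2) * L1 y - (- p) * (1 - y)) <= (p * eta) * (1 - y)).
  { apply (quot_bound (fun s => (1 - s ^ 2) * L1 s) (fun s => - p * L s) 0 (- p) (p * eta) d y); auto.
    - nra.
    - intros x Hx. apply (W_d _ _ _ _ _ H). lra.
    - intros x Hx. replace (- p * L x - - p) with (p * (1 - L x)) by ring.
      rewrite Rabs_mult, Rabs_right by lra. apply Rmult_le_compat_l. lra.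
      replace (1 - L x) with (- (L x - 1)) by ring. rewrite Rabs_Ropp. left; apply Hl; lra.
    - intros e He. destruct (W_t0 _ _ _ _ _ H e He) as [dd [Hdd Hdd']]. exists dd; split; auto.
      intros t Ht. rewrite Rminus_0_r. auto. }
  apply abs_le in B. destruct B as [B1 B2].
  assert (Hy1 : 0 < 1 - y) by lra.
  assert (Hm : (1 - y) * ((1 + y) * (L1 y - p / 2)) <= (1 - y) * (p * eta + p * (1 - y) / 2)) by nra.
  assert (Hm' : (1 - y) * (- (p * eta + p * (1 - y) / 2)) <= (1 - y) * ((1 + y) * (L1 y - p / 2))) by nra.
  apply Rmult_le_reg_l in Hm; auto. apply Rmult_le_reg_l in Hm'; auto.
  assert (p * eta = eps / 4) by (unfold eta; field; lra).
  assert (p * (1 - y) / 2 < eps / 4).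
  { assert (p * (1 - y) < p * (eps / (2 * p))) by (apply Rmult_lt_compat_l; lra).
    assert (p * (eps / (2 * p)) = eps / 2) by (field; lra). lra. }
  apply Rabs_def1.
  - destruct (Rle_or_lt (L1 y - p / 2) 0). lra. nra.
  - destruct (Rle_or_lt 0 (L1 y - p / 2)). lra. nra.
Qed.

Lemma L_left_deriv p z L L1 L2 (H : LH p z L L1 L2) : forall eps, 0 < eps ->
  exists d, 0 < d /\ forall y, 1 - d < y < 1 -> Rabs ((L y - 1) / (y - 1) - p / 2) <= eps.
Proof.
  intros eps Heps. destruct (L1_lim _ _ _ _ _ H eps Heps) as [d1 [Hd1 Hl]].
  set (d := Rmin d1 1).
  assert (0 < d) by (apply Rmin_pos; lra).
  assert (d <= d1) by apply Rmin_l. assert (d <= 1) by apply Rmin_r.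
  exists d. split; auto. intros y Hy.
  assert (B : Rabs (1 - L y - p / 2 * (1 - y)) <= eps * (1 - y)).
  { apply (quot_bound L L1 1 (p / 2) eps d y); auto; try lra.
    intros x Hx; apply (lh_d1 _ _ _ _ _ H); lra.
    intros x Hx; left; apply Hl; lra.
    exact (lh_lim _ _ _ _ _ H). }
  replace ((L y - 1) / (y - 1) - p / 2) with ((1 - L y - p / 2 * (1 - y)) / (1 - y)) by (field; lra).
  unfold Rdiv. rewrite Rabs_mult, Rabs_inv, (Rabs_right (1 - y)) by lra.
  apply (Rmult_le_reg_r (1 - y)). lra. rewrite Rmult_assoc, Rinv_l by lra. lra.
Qed.


Lemma L_t0 p z L L1 L2 (H : LH p z L L1 L2) : tends0 (fun s => (1 - s ^ 2) * L s).
Proof.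
  destruct (L_bnd _ _ _ _ _ H) as [d0 [Hd0 [_ Hb]]].
  eapply t0_ext. apply (t0_bmul L (fun s => 1 - s ^ 2) 2 d0); auto.
  intros; left; apply Hb; auto. apply t0_1ms2. intros; simpl; ring.
Qed.

Lemma L_pos p z L L1 L2 (H : LH p z L L1 L2) s : z < s < 1 -> 0 < L s.
Proof.
  intros Hs. destruct (Rlt_or_le 0 (L s)) as [|Hle]; auto. exfalso.
  assert (Hlt : L s < 0) by (destruct Hle; auto; exfalso; apply (lh_zmax _ _ _ _ _ H s); auto).
  destruct (lh_lim _ _ _ _ _ H (1/2)) as [d [Hd Hd']]; [lra|].
  set (t := (Rmax s (1 - d) + 1) / 2).
  pose proof (Rmax_l s (1-d)). pose proof (Rmax_r s (1-d)).
  assert (Rmax s (1-d) < 1) by (apply Rmax_lub_lt; lra).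
  assert (Lt : 0 < L t). { assert (Rabs (L t - 1) < 1/2) by (apply Hd'; unfold t; lra). apply abs_lt in H3. lra. }
  pose proof (lh_z _ _ _ _ _ H).
  destruct (Ranalysis5.IVT_interv L s t) as [w [Hw Hw0]]; auto.
  intros a Ha. apply derivable_continuous_pt. exists (L1 a). apply (lh_d1 _ _ _ _ _ H). unfold t in *; lra.
  unfold t; lra.
  apply (lh_zmax _ _ _ _ _ H w); auto. unfold t in *; lra.
Qed.

Lemma W_pos p z L L1 L2 (H : LH p z L L1 L2) s : z <= s < 1 -> 0 < (1 - s ^ 2) * L1 s.
Proof.
  intros Hs. pose proof (lh_z _ _ _ _ _ H). pose proof (lh_p _ _ _ _ _ H).
  apply (pos_of_sdecr (fun s => (1 - s ^ 2) * L1 s) (fun s => - p * L s) s). lra.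
  intros t Ht; apply (W_d _ _ _ _ _ H); lra.
  intros t Ht. assert (0 < L t) by (apply (L_pos _ _ _ _ _ H); lra). nra.
  apply (W_t0 _ _ _ _ _ H).
Qed.

Lemma L1_pos p z L L1 L2 (H : LH p z L L1 L2) s : z <= s < 1 -> 0 < L1 s.
Proof.
  intros Hs. pose proof (lh_z _ _ _ _ _ H). pose proof (W_pos _ _ _ _ _ H s Hs).
  assert (0 < 1 - s ^ 2) by nra.
  destruct (Rlt_or_le 0 (L1 s)); auto. nra.
Qed.

Lemma z_pos p z L L1 L2 (H : LH p z L L1 L2) : 0 < z.
Proof.
  pose proof (lh_z _ _ _ _ _ H) as Hz. pose proof (lh_p _ _ _ _ _ H) as Hp.
  destruct (Rlt_or_le 0 z) as [|Hz0]; auto. exfalso.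
  set (V := fun s => s * ((1 - s ^ 2) * L1 s) - (1 - s ^ 2) * L s).
  assert (0 < V 0).
  { apply (pos_of_sdecr V (fun s => - (p - 2) * s * L s) 0). lra.
    - intros t Ht. unfold V. eapply dpl_eq. apply dpl_sub. apply dpl_mul. apply dpl_id.
      apply (W_d _ _ _ _ _ H); lra. apply dpl_mul. apply dpl_1ms2. apply (lh_d1 _ _ _ _ _ H); lra.
      cbv beta; ring.
    - intros t Ht. assert (0 < L t) by (apply (L_pos _ _ _ _ _ H); lra).
      assert (0 < t * L t) by nra. nra.
    - unfold V. eapply t0_ext. apply t0_add.
      apply (t0_bmul (fun s => s) (fun s => (1 - s ^ 2) * L1 s) 1 1); try lra. intros s Hs; apply abs_le_i; lra.
      apply (W_t0 _ _ _ _ _ H).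
      apply (t0_bmul (fun s => -1) (fun s => (1 - s ^ 2) * L s) 1 1); try lra. intros s Hs; apply abs_le_i; lra.
      apply (L_t0 _ _ _ _ _ H).
      intros; cbv beta; ring. }
  unfold V in H0. replace (0 * ((1 - 0 ^ 2) * L1 0) - (1 - 0 ^ 2) * L 0) with (- L 0) in H0 by ring.
  destruct Hz0 as [Hz0|Hz0].
  - assert (0 < L 0) by (apply (L_pos _ _ _ _ _ H); lra). lra.
  - subst z. pose proof (lh_Lz _ _ _ _ _ H). lra.
Qed.

Lemma Q_neg p z L L1 L2 (H : LH p z L L1 L2) s : z < s < 1 -> p * L s - 2 * s * L1 s < 0.
Proof.
  intros Hs. pose proof (lh_z _ _ _ _ _ H) as Hz. pose proof (lh_p _ _ _ _ _ H) as Hp.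
  set (R0 := fun s => - (p * ((1 - s ^ 2) * L s) - 2 * s * ((1 - s ^ 2) * L1 s))).
  assert (0 < R0 s).
  { apply (pos_of_sdecr R0 (fun s => - ((p - 2) * ((1 - s ^ 2) * L1 s))) s). lra.
    - intros t Ht. unfold R0. eapply dpl_eq. apply dpl_opp. apply dpl_sub.
      apply dpl_scal. apply dpl_mul. apply dpl_1ms2. apply (lh_d1 _ _ _ _ _ H); lra.
      apply dpl_mul. apply dpl_scal. apply dpl_id. apply (W_d _ _ _ _ _ H); lra. cbv beta; ring.
    - intros t Ht. assert (0 < (1 - t ^ 2) * L1 t) by (apply (W_pos _ _ _ _ _ H); lra). nra.
    - unfold R0. eapply t0_ext. apply t0_add.
      apply (t0_bmul (fun s => - p) (fun s => (1 - s ^ 2) * L s) p 1); try lra. intros s' Hs'; apply abs_le_i; lra.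
      apply (L_t0 _ _ _ _ _ H).
      apply (t0_bmul (fun s => 2 * s) (fun s => (1 - s ^ 2) * L1 s) 2 1); try lra. intros s' Hs'; apply abs_le_i; lra.
      apply (W_t0 _ _ _ _ _ H).
      intros; cbv beta; ring. }
  unfold R0 in H0. assert (0 < 1 - s ^ 2) by nra.
  assert ((1 - s ^ 2) * (p * L s - 2 * s * L1 s) < 0) by nra. nra.
Qed.


Definition hD1 p c s := p / 2 * Rpower ((1 + s) / 2) (p - 1) + pw c p * (p / 2) * Rpower ((1 - s) / 2) (p - 1).
Definition hD2 p c s := p * (p - 1) / 4 * (Rpower ((1 + s) / 2) (p - 2) - pw c p * Rpower ((1 - s) / 2) (p - 2)).
Definition Eh p c s := Rpower ((1 + s) / 2) (p - 2) - pw c p * Rpower ((1 - s) / 2) (p - 2).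

Lemma pw_pos x y : 0 < x -> pw x y = Rpower x y.
Proof. intros; unfold pw; destruct (Rle_dec x 0); lra. Qed.
Lemma pw_nonpos x y : x <= 0 -> pw x y = 0.
Proof. intros; unfold pw; destruct (Rle_dec x 0); lra. Qed.
Lemma Rpower_pos x y : 0 < Rpower x y.
Proof. unfold Rpower; apply exp_pos. Qed.
Lemma pw_nonneg x y : 0 <= pw x y.
Proof. unfold pw; destruct (Rle_dec x 0). lra. left; apply Rpower_pos. Qed.
Lemma Rpower_1base q : Rpower 1 q = 1.
Proof. unfold Rpower; rewrite ln_1, Rmult_0_r; apply exp_0. Qed.
Lemma Rpower_le1 x q : 0 < x <= 1 -> 0 <= q -> Rpower x q <= 1.
Proof. intros; rewrite <- (Rpower_1base q); apply Rle_Rpower_l; lra. Qed.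
Lemma Rpower_p1 x q : 0 < x -> Rpower x (q + 1) = x * Rpower x q.
Proof. intros; rewrite Rpower_plus, Rpower_1 by auto; ring. Qed.
Lemma Rpower_sh x q : 0 < x -> Rpower x q = x * Rpower x (q - 1).
Proof. intros; replace q with ((q - 1) + 1) at 1 by ring; apply Rpower_p1; auto. Qed.

Lemma hc_eq p c s : -1 < s < 1 ->
  hc p c s = Rpower ((1 + s) / 2) p - pw c p * Rpower ((1 - s) / 2) p.
Proof. intros; unfold hc; rewrite (pw_pos ((1+s)/2)), (pw_pos ((1-s)/2)) by lra; auto. Qed.

Lemma dpl_Rp_u q s : -1 < s -> derivable_pt_lim (fun s => Rpower ((1 + s) / 2) q) s (q * Rpower ((1 + s) / 2) (q - 1) * (1/2)).
Proof.
  intros Hs. apply (dpl_comp (fun y => Rpower y q) (fun s => (1 + s) / 2)).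
  apply (dpl_fext (fun s => / 2 * (1 + s))). intros; field.
  eapply dpl_eq. apply (dpl_scal (/2) (fun s => 1 + s)). eapply dpl_eq. apply dpl_add. apply dpl_const. apply dpl_id.
  reflexivity. field. apply derivable_pt_lim_power. lra.
Qed.
Lemma dpl_Rp_v q s : s < 1 -> derivable_pt_lim (fun s => Rpower ((1 - s) / 2) q) s (q * Rpower ((1 - s) / 2) (q - 1) * (-1/2)).
Proof.
  intros Hs. apply (dpl_comp (fun y => Rpower y q) (fun s => (1 - s) / 2)).
  apply (dpl_fext (fun s => / 2 * (1 - s))). intros; field.
  eapply dpl_eq. apply (dpl_scal (/2) (fun s => 1 - s)). eapply dpl_eq. apply dpl_sub. apply dpl_const. apply dpl_id.
  reflexivity. field. apply derivable_pt_lim_power. lra.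
Qed.

Lemma hc_d1 p c s : -1 < s < 1 -> derivable_pt_lim (hc p c) s (hD1 p c s).
Proof.
  intros Hs. apply (dpl_ext (fun s => Rpower ((1 + s) / 2) p - pw c p * Rpower ((1 - s) / 2) p) _ _ _ (Rmin (1 + s) (1 - s))).
  apply Rmin_pos; lra.
  intros y Hy. pose proof (Rmin_l (1+s) (1-s)). pose proof (Rmin_r (1+s) (1-s)). apply abs_lt in Hy.
  rewrite hc_eq; auto. lra.
  eapply dpl_eq. apply dpl_sub. apply dpl_Rp_u; lra. apply dpl_scal. apply dpl_Rp_v; lra.
  unfold hD1. field.
Qed.

Lemma H1_d p c s : -1 < s < 1 -> derivable_pt_lim (hD1 p c) s (hD2 p c s).
Proof.
  intros Hs. unfold hD1. eapply dpl_eq. apply dpl_add. apply dpl_scal. apply dpl_Rp_u; lra.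
  apply dpl_scal. apply dpl_Rp_v; lra.
  unfold hD2. replace (p - 1 - 1) with (p - 2) by ring. field.
Qed.

Lemma Dh_eq p c s : -1 < s < 1 ->
  Dop p s (hc p c s) (hD1 p c s) (hD2 p c s) = p ^ 2 * ((1 + s) / 2) * ((1 - s) / 2) * Eh p c s.
Proof.
  intros Hs. rewrite hc_eq by auto. unfold Dop, hD1, hD2, Eh.
  set (u := (1 + s) / 2). set (v := (1 - s) / 2).
  assert (0 < u) by (unfold u; lra). assert (0 < v) by (unfold v; lra).
  rewrite (Rpower_sh u p), (Rpower_sh u (p - 1)), (Rpower_sh v p), (Rpower_sh v (p - 1)) by auto.
  replace (p - 1 - 1) with (p - 2) by ring.
  replace s with (u - v) by (unfold u, v; field). replace (1 - (u - v) ^ 2) with (4 * u * v) by (unfold u, v; field).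
  field.
Qed.

Lemma Kh_eq p c s : -1 < s < 1 -> Kop p s (hc p c s) (hD1 p c s) (hD2 p c s) = 0.
Proof.
  intros Hs. rewrite hc_eq by auto. unfold Kop, hD1, hD2.
  set (u := (1 + s) / 2). set (v := (1 - s) / 2).
  assert (0 < u) by (unfold u; lra). assert (0 < v) by (unfold v; lra).
  rewrite (Rpower_sh u p), (Rpower_sh u (p - 1)), (Rpower_sh v p), (Rpower_sh v (p - 1)) by auto.
  replace (p - 1 - 1) with (p - 2) by ring.
  replace s with (u - v) by (unfold u, v; field). replace (1 - (u - v) ^ 2) with (4 * u * v) by (unfold u, v; field).
  replace 1 with (u + v) by (unfold u, v; field). field.
Qed.

Lemma Eh_factor p c s : -1 < s < 1 ->
  Eh p c s = Rpower ((1 - s) / 2) (p - 2) * (Rpower ((1 + s) / (1 - s)) (p - 2) - pw c p).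
Proof.
  intros Hs. unfold Eh.
  replace (Rpower ((1 + s) / 2) (p - 2)) with (Rpower ((1 + s) / (1 - s)) (p - 2) * Rpower ((1 - s) / 2) (p - 2)).
  ring. rewrite Rpower_mult_distr. f_equal; field; lra.
  apply Rdiv_lt_0_compat; lra. lra.
Qed.

Lemma Eh_neg_le p c s : 1 <= c -> 2 < p -> -1 < s < 1 -> (1 + s) / (1 - s) <= c -> Eh p c s <= 0.
Proof.
  intros Hc Hp Hs Hsc. rewrite Eh_factor by auto.
  assert (Rpower ((1 + s) / (1 - s)) (p - 2) <= Rpower c (p - 2)).
  { apply Rle_Rpower_l. lra. split; auto. apply Rdiv_lt_0_compat; lra. }
  assert (Rpower c (p - 2) <= Rpower c p) by (apply Rle_Rpower; lra).
  rewrite pw_pos by lra.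
  pose proof (Rpower_pos ((1 - s) / 2) (p - 2)). nra.
Qed.

Lemma Eh_mono p c s1 s2 : 2 < p -> -1 < s1 -> s1 < s2 -> s2 < 1 -> Eh p c s2 <= 0 -> Eh p c s1 <= 0.
Proof.
  intros Hp hD1 H12 hD2 He. rewrite Eh_factor in * by lra.
  pose proof (Rpower_pos ((1 - s1) / 2) (p - 2)). pose proof (Rpower_pos ((1 - s2) / 2) (p - 2)).
  assert (Rpower ((1 + s2) / (1 - s2)) (p - 2) - pw c p <= 0).
  { destruct (Rle_or_lt (Rpower ((1 + s2) / (1 - s2)) (p - 2) - pw c p) 0); auto. nra. }
  assert (Rpower ((1 + s1) / (1 - s1)) (p - 2) < Rpower ((1 + s2) / (1 - s2)) (p - 2)).
  { apply Rlt_Rpower_l. lra. split. apply Rdiv_lt_0_compat; lra.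
    apply (Rmult_lt_reg_r ((1 - s1) * (1 - s2))). nra. field_simplify; try lra. }
  nra.
Qed.

Lemma H1_pos p c s : 0 < p -> -1 < s < 1 -> 0 < hD1 p c s.
Proof.
  intros Hp Hs. unfold hD1. pose proof (Rpower_pos ((1 + s) / 2) (p - 1)).
  pose proof (Rpower_pos ((1 - s) / 2) (p - 1)). pose proof (pw_nonneg c p).
  assert (0 < p / 2 * Rpower ((1 + s) / 2) (p - 1)) by (apply Rmult_lt_0_compat; lra).
  assert (0 <= pw c p * (p / 2) * Rpower ((1 - s) / 2) (p - 1)).
  { apply Rmult_le_pos; [apply Rmult_le_pos|]; lra. }
  lra.
Qed.

Lemma H1_bnd p c s : 1 < p -> -1 < s < 1 -> Rabs (hD1 p c s) <= p / 2 * (1 + pw c p).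
Proof.
  intros Hp Hs. pose proof (H1_pos p c s) as Hpos. rewrite Rabs_right by (left; apply Hpos; lra).
  unfold hD1. pose proof (pw_nonneg c p).
  assert (Rpower ((1 + s) / 2) (p - 1) <= 1) by (apply Rpower_le1; lra).
  assert (Rpower ((1 - s) / 2) (p - 1) <= 1) by (apply Rpower_le1; lra).
  assert (pw c p * (p / 2) * Rpower ((1 - s) / 2) (p - 1) <= pw c p * (p / 2) * 1).
  { apply Rmult_le_compat_l; auto. apply Rmult_le_pos; lra. }
  nra.
Qed.

Lemma hc_bnd p c s : 0 < p -> -1 < s < 1 -> Rabs (hc p c s) <= 1 + pw c p.
Proof.
  intros Hp Hs. rewrite hc_eq by auto. pose proof (pw_nonneg c p).
  assert (Rpower ((1 + s) / 2) p <= 1) by (apply Rpower_le1; lra).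
  assert (Rpower ((1 - s) / 2) p <= 1) by (apply Rpower_le1; lra).
  pose proof (Rpower_pos ((1 + s) / 2) p). pose proof (Rpower_pos ((1 - s) / 2) p).
  apply abs_le_i. split; nra.
Qed.

Lemma hc_z p z : -1 < z < 1 -> hc p ((1 + z) / (1 - z)) z = 0.
Proof.
  intros Hz. unfold hc. rewrite !pw_pos by (try apply Rdiv_lt_0_compat; lra).
  rewrite Rpower_mult_distr by (try apply Rdiv_lt_0_compat; lra).
  replace ((1 + z) / (1 - z) * ((1 - z) / 2)) with ((1 + z) / 2) by (field; lra). ring.
Qed.

Lemma hc_1 p c : hc p c 1 = 1.
Proof.
  unfold hc. rewrite (pw_nonpos ((1 - 1) / 2)) by lra. rewrite pw_pos by lra.
  replace ((1 + 1) / 2) with 1 by field. rewrite Rpower_1base. ring.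
Qed.

Lemma hc_lim1 p c : 1 < p -> forall eps, 0 < eps -> exists d, 0 < d /\
  forall s, 1 - d < s < 1 -> Rabs (hc p c s - 1) < eps.
Proof.
  intros Hp eps He. pose proof (pw_nonneg c p) as HK.
  destruct (dpl_cont _ _ _ (dpl_Rp_u p 1 ltac:(lra)) (eps / 2)) as [d1 [Hd1 Hd1']]; [lra|].
  set (d := Rmin (Rmin d1 1) (eps / (pw c p + 1))).
  assert (0 < eps / (pw c p + 1)) by (apply Rdiv_lt_0_compat; lra).
  assert (Hdp : 0 < d) by (apply Rmin_pos; [apply Rmin_pos|]; lra).
  assert (d <= d1) by (unfold d; eapply Rle_trans; [apply Rmin_l|apply Rmin_l]).
  assert (d <= 1) by (unfold d; eapply Rle_trans; [apply Rmin_l|apply Rmin_r]).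
  assert (Hde : d <= eps / (pw c p + 1)) by (unfold d; apply Rmin_r).
  exists d. split; auto. intros s Hs.
  rewrite hc_eq by lra.
  specialize (Hd1' s). replace ((1 + 1) / 2) with 1 in Hd1' by field. rewrite Rpower_1base in Hd1'.
  assert (A : Rabs (Rpower ((1 + s) / 2) p - 1) < eps / 2) by (apply Hd1'; apply abs_lt_i; lra).
  apply abs_lt in A.
  assert (B0 : Rpower ((1 - s) / 2) p <= (1 - s) / 2).
  { rewrite Rpower_sh by lra. assert (Rpower ((1 - s) / 2) (p - 1) <= 1) by (apply Rpower_le1; lra).
    assert (0 < (1 - s) / 2) by lra. nra. }
  pose proof (Rpower_pos ((1 - s) / 2) p).
  assert (B : pw c p * Rpower ((1 - s) / 2) p < eps / 2).
  { assert (pw c p * Rpower ((1 - s) / 2) p <= (pw c p + 1) * ((1 - s) / 2)) by nra.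
    assert ((pw c p + 1) * (1 - s) < (pw c p + 1) * (eps / (pw c p + 1))) by (apply Rmult_lt_compat_l; lra).
    assert ((pw c p + 1) * (eps / (pw c p + 1)) = eps) by (field; lra). nra. }
  assert (0 <= pw c p * Rpower ((1 - s) / 2) p) by nra.
  apply abs_lt_i; lra.
Qed.


Definition cc z := (1 + z) / (1 - z).

Lemma cc_ge1 z : 0 < z < 1 -> 1 <= cc z.
Proof. intros; unfold cc. apply (Rmult_le_reg_r (1 - z)). lra. field_simplify; lra. Qed.

Lemma V2_d p z L L1 L2 (H : LH p z L L1 L2) s : -1 < s < 1 ->
  derivable_pt_lim (fun s => (1 - s ^ 2) * hD1 p (cc z) s * L s - hc p (cc z) s * ((1 - s ^ 2) * L1 s)) s
    (Dop p s (hc p (cc z) s) (hD1 p (cc z) s) (hD2 p (cc z) s) * L s).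
Proof.
  intros Hs. eapply dpl_eq. apply dpl_sub. apply dpl_mul. apply dpl_mul. apply dpl_1ms2. apply H1_d; auto.
  apply (lh_d1 _ _ _ _ _ H); auto. apply dpl_mul. apply hc_d1; auto. apply (W_d _ _ _ _ _ H); auto.
  unfold Dop. cbv beta. ring.
Qed.

Lemma V2_nonpos p z L L1 L2 (H : LH p z L L1 L2) s0 : z < s0 < 1 ->
  (1 - s0 ^ 2) * hD1 p (cc z) s0 * L s0 - hc p (cc z) s0 * ((1 - s0 ^ 2) * L1 s0) <= 0.
Proof.
  intros Hs. pose proof (lh_z _ _ _ _ _ H) as Hz. pose proof (lh_p _ _ _ _ _ H) as Hp.
  set (V := fun s => (1 - s ^ 2) * hD1 p (cc z) s * L s - hc p (cc z) s * ((1 - s ^ 2) * L1 s)).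
  change (V s0 <= 0).
  assert (Vz : V z = 0).
  { unfold V. rewrite (lh_Lz _ _ _ _ _ H). unfold cc. rewrite hc_z by lra. ring. }
  destruct (Rle_or_lt (Eh p (cc z) s0) 0) as [He|He].
  - destruct (MVT_cor2 V (fun s => Dop p s (hc p (cc z) s) (hD1 p (cc z) s) (hD2 p (cc z) s) * L s) z s0) as [x [Hx1 Hx2]].
    lra. intros x Hx. apply (V2_d _ _ _ _ _ H). lra.
    rewrite Dh_eq in Hx1 by lra.
    assert (Eh p (cc z) x <= 0) by (destruct (Req_dec x s0) as [->|]; auto; apply (Eh_mono _ _ x s0); lra).
    assert (0 < L x) by (apply (L_pos _ _ _ _ _ H); lra).
    assert (0 < p ^ 2 * ((1 + x) / 2) * ((1 - x) / 2)) by (apply Rmult_lt_0_compat; [apply Rmult_lt_0_compat|]; nra).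
    assert (p ^ 2 * ((1 + x) / 2) * ((1 - x) / 2) * Eh p (cc z) x * L x <= 0).
    { apply Rmult_le_0_r. 2: lra. apply Rmult_le_0_l. lra. auto. }
    assert (0 < s0 - z) by lra.
    assert (V s0 - V z <= 0) by (rewrite Hx1; apply Rmult_le_0_r; lra).
    lra.
  - assert (0 < - V s0).
    { apply (pos_of_sdecr (fun s => - V s) (fun s => - (Dop p s (hc p (cc z) s) (hD1 p (cc z) s) (hD2 p (cc z) s) * L s)) s0).
      lra.
      + intros t Ht. apply dpl_opp. apply (V2_d _ _ _ _ _ H). lra.
      + intros t Ht. rewrite Dh_eq by lra.
        assert (0 < Eh p (cc z) t).
        { destruct (Rle_or_lt (Eh p (cc z) t) 0) as [Ht'|]; auto.
          assert (Eh p (cc z) s0 <= 0) by (apply (Eh_mono _ _ s0 t); lra). lra. }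
        assert (0 < L t) by (apply (L_pos _ _ _ _ _ H); lra).
        assert (0 < p ^ 2 * ((1 + t) / 2) * ((1 - t) / 2)) by (apply Rmult_lt_0_compat; [apply Rmult_lt_0_compat|]; nra).
        assert (0 < p ^ 2 * ((1 + t) / 2) * ((1 - t) / 2) * Eh p (cc z) t * L t).
        { apply Rmult_lt_0_compat; [apply Rmult_lt_0_compat|]; auto. }
        lra.
      + unfold V. eapply t0_ext. apply t0_add.
        apply (t0_bmul (fun s => - hD1 p (cc z) s) (fun s => (1 - s ^ 2) * L s) (p / 2 * (1 + pw (cc z) p)) 1); try lra.
        intros s Hs'. rewrite Rabs_Ropp. apply H1_bnd; lra.
        apply (L_t0 _ _ _ _ _ H).
        apply (t0_bmul (fun s => hc p (cc z) s) (fun s => (1 - s ^ 2) * L1 s) (1 + pw (cc z) p) 1); try lra.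
        intros s Hs'. apply hc_bnd; lra.
        apply (W_t0 _ _ _ _ _ H).
        intros; cbv beta; ring. }
    lra.
Qed.

Lemma hz_eq p z L L1 L2 (H : LH p z L L1 L2) hz :
  derivable_pt_lim (hc p (cc z)) z hz -> hz = hD1 p (cc z) z.
Proof.
  intros Hh. pose proof (lh_z _ _ _ _ _ H). eapply uniqueness_limite. exact Hh. apply hc_d1; lra.
Qed.

Lemma G_nonneg p z L L1 L2 (H : LH p z L L1 L2) hz :
  derivable_pt_lim (hc p (cc z)) z hz -> forall s0, z < s0 < 1 ->
  0 <= hz / L1 z * L s0 - hc p (cc z) s0.
Proof.
  intros Hh s0 Hs0. pose proof (lh_z _ _ _ _ _ H) as Hz. pose proof (lh_p _ _ _ _ _ H) as Hp.
  pose proof (hz_eq _ _ _ _ _ H _ Hh) as Hhz.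
  assert (HL1z : 0 < L1 z) by (apply (L1_pos _ _ _ _ _ H); lra).
  set (a := hz / L1 z).
  set (G := fun s => a * L s - hc p (cc z) s).
  change (0 <= G s0).
  destruct (Rle_or_lt 0 (G s0)) as [|Hneg]; auto. exfalso.
  assert (HLs0 : 0 < L s0) by (apply (L_pos _ _ _ _ _ H); lra).
  set (m := G s0 / L s0).
  assert (Hm : m < 0) by (unfold m; apply Rdiv_neg_pos; auto).
  (* monotonicity of G/L *)
  assert (Hmono : forall t, z < t < s0 -> G t <= m * L t).
  { intros t Ht. assert (HLt : 0 < L t) by (apply (L_pos _ _ _ _ _ H); lra).
    set (Phi' := fun s => ((a * L1 s - hD1 p (cc z) s) * L s - L1 s * G s) / Rsqr (L s)).
    destruct (MVT_cor2 (fun s => G s / L s) Phi' t s0) as [x [Hx1 Hx2]]. lra.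
    { intros x Hx. assert (0 < L x) by (apply (L_pos _ _ _ _ _ H); lra).
      unfold Phi'. apply (derivable_pt_lim_div G L). unfold G. apply dpl_sub. apply dpl_scal.
      apply (lh_d1 _ _ _ _ _ H); lra. apply hc_d1; lra. apply (lh_d1 _ _ _ _ _ H); lra. lra. }
    assert (0 <= Phi' x).
    { unfold Phi'. assert (0 < L x) by (apply (L_pos _ _ _ _ _ H); lra).
      pose proof (V2_nonpos _ _ _ _ _ H x ltac:(lra)) as HV.
      assert (0 < 1 - x ^ 2) by nra.
      assert (hD1 p (cc z) x * L x - hc p (cc z) x * L1 x <= 0).
      { assert ((1 - x ^ 2) * (hD1 p (cc z) x * L x - hc p (cc z) x * L1 x) <= 0) by nra. nra. }
      unfold Rdiv. apply Rmult_le_pos. unfold G. nra. left; apply Rinv_0_lt_compat. unfold Rsqr; nra. }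
    assert (HGt : G t / L t <= m) by (unfold m; nra).
    apply (Rmult_le_compat_r (L t)) in HGt; [|lra]. unfold Rdiv in HGt. rewrite Rmult_assoc, Rinv_l in HGt by lra. lra. }
  assert (HGz : G z = 0) by (unfold G; rewrite (lh_Lz _ _ _ _ _ H); unfold cc; rewrite hc_z by lra; ring).
  assert (HGd : derivable_pt_lim G z 0).
  { unfold G. eapply dpl_eq. apply dpl_sub. apply dpl_scal. apply (lh_d1 _ _ _ _ _ H); lra. apply hc_d1; lra.
    unfold a. rewrite Hhz. field. lra. }
  set (e1 := - m * L1 z / 4).
  assert (He1 : 0 < e1) by (unfold e1; nra).
  destruct (HGd e1 He1) as [d1 Hd1]. destruct ((lh_d1 _ _ _ _ _ H z Hz) (L1 z / 2) ltac:(lra)) as [d2 Hd2].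
  pose proof (cond_pos d1). pose proof (cond_pos d2).
  set (h := Rmin (Rmin d1 d2) (s0 - z) / 2).
  assert (Hh0 : 0 < h) by (unfold h; apply Rdiv_lt_0_compat; [apply Rmin_pos; [apply Rmin_pos|]|]; lra).
  assert (Hh1 : h < d1) by (unfold h; pose proof (Rmin_l (Rmin d1 d2) (s0 - z)); pose proof (Rmin_l d1 d2); lra).
  assert (Hh2 : h < d2) by (unfold h; pose proof (Rmin_l (Rmin d1 d2) (s0 - z)); pose proof (Rmin_r d1 d2); lra).
  assert (Hh3 : h < s0 - z) by (unfold h; pose proof (Rmin_r (Rmin d1 d2) (s0 - z)); lra).
  assert (Habs : Rabs h = h) by (apply Rabs_right; lra).
  specialize (Hd1 h ltac:(lra) ltac:(lra)). specialize (Hd2 h ltac:(lra) ltac:(lra)).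
  rewrite HGz in Hd1. rewrite (lh_Lz _ _ _ _ _ H) in Hd2.
  apply abs_lt in Hd1. apply abs_lt in Hd2.
  replace ((G (z + h) - 0) / h - 0) with (G (z + h) / h) in Hd1 by (field; lra).
  replace ((L (z + h) - 0) / h - L1 z) with (L (z + h) / h - L1 z) in Hd2 by (field; lra).
  assert (A1 : - e1 * h < G (z + h)).
  { destruct Hd1 as [Hd1 _]. apply (Rmult_lt_compat_r h) in Hd1; auto. unfold Rdiv in Hd1.
    rewrite Rmult_assoc, Rinv_l in Hd1 by lra. lra. }
  assert (A2 : L1 z / 2 * h < L (z + h)).
  { destruct Hd2 as [Hd2 _]. assert (HH : L1 z / 2 < L (z + h) / h) by lra.
    apply (Rmult_lt_compat_r h) in HH; auto. replace (L (z + h) / h * h) with (L (z + h)) in HH by (field; lra). lra. }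
  specialize (Hmono (z + h) ltac:(lra)).
  assert (m * L (z + h) < m * (L1 z / 2 * h)) by (apply Rmult_lt_gt_compat_neg_l; lra).
  assert (m * (L1 z / 2 * h) = - 2 * e1 * h) by (unfold e1; field).
  nra.
Qed.

Lemma a_ge1 p z L L1 L2 (H : LH p z L L1 L2) hz :
  derivable_pt_lim (hc p (cc z)) z hz -> 1 <= hz / L1 z.
Proof.
  intros Hh. pose proof (lh_z _ _ _ _ _ H) as Hz. pose proof (lh_p _ _ _ _ _ H) as Hp.
  set (a := hz / L1 z). apply le_eps. intros e He.
  assert (Ha : 0 < Rabs a + 1) by (pose proof (Rabs_pos a); lra).
  destruct (lh_lim _ _ _ _ _ H (e / (2 * (Rabs a + 1)))) as [d1 [Hd1 Hd1']].
  apply Rdiv_lt_0_compat; lra.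
  destruct (hc_lim1 p (cc z) ltac:(lra) (e / 2)) as [d2 [Hd2 Hd2']]; [lra|].
  set (t0 := Rmax z (Rmax (1 - d1) (1 - d2))).
  pose proof (Rmax_l z (Rmax (1 - d1) (1 - d2))). pose proof (Rmax_r z (Rmax (1 - d1) (1 - d2))).
  pose proof (Rmax_l (1 - d1) (1 - d2)). pose proof (Rmax_r (1 - d1) (1 - d2)).
  assert (t0 < 1) by (unfold t0; apply Rmax_lub_lt; [|apply Rmax_lub_lt]; lra).
  set (t := (t0 + 1) / 2).
  assert (G : 0 <= a * L t - hc p (cc z) t) by (apply (G_nonneg _ _ _ _ _ H hz Hh); unfold t, t0 in *; lra).
  assert (A : Rabs (L t - 1) < e / (2 * (Rabs a + 1))) by (apply Hd1'; unfold t, t0 in *; lra).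
  assert (B : Rabs (hc p (cc z) t - 1) < e / 2) by (apply Hd2'; unfold t, t0 in *; lra).
  apply abs_lt in B.
  assert (C : Rabs (a * (L t - 1)) <= e / 2).
  { rewrite Rabs_mult. assert (Rabs a * Rabs (L t - 1) <= (Rabs a + 1) * (e / (2 * (Rabs a + 1)))).
    { apply Rmult_le_compat; try apply Rabs_pos; lra. }
    assert ((Rabs a + 1) * (e / (2 * (Rabs a + 1))) = e / 2) by (field; lra). lra. }
  apply abs_le in C. lra.
Qed.

Lemma claim2 p z L L1 L2 (H : LH p z L L1 L2) hz :
  derivable_pt_lim (hc p (cc z)) z hz -> forall s, -1 <= s <= 1 ->
  gp p (cc z) (hz / L1 z) z L s >= hc p (cc z) s.
Proof.
  intros Hh s Hs. pose proof (lh_z _ _ _ _ _ H) as Hz. unfold gp. destruct (Rle_dec z s) as [Hzs|]; [|lra].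
  destruct (Req_dec s 1) as [->|Hs1].
  - rewrite (lh_1 _ _ _ _ _ H), hc_1. pose proof (a_ge1 _ _ _ _ _ H hz Hh). lra.
  - destruct (Req_dec s z) as [->|Hsz].
    + rewrite (lh_Lz _ _ _ _ _ H). unfold cc. rewrite hc_z by lra. lra.
    + pose proof (G_nonneg _ _ _ _ _ H hz Hh s ltac:(lra)). lra.
Qed.


Lemma g_loc p z L L1 L2 (H : LH p z L L1 L2) hz :
  derivable_pt_lim (hc p (cc z)) z hz -> forall s, -1 < s < 1 -> s <> z ->
  let g := gp p (cc z) (hz / L1 z) z L in
  exists lo hi (G1 G2 : R -> R), -1 <= lo /\ lo < s /\ s < hi /\ hi <= 1 /\
    (forall y, lo < y < hi -> derivable_pt_lim g y (G1 y) /\ derivable_pt_lim G1 y (G2 y)) /\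
    Dop p s (g s) (G1 s) (G2 s) <= 0 /\ Kop p s (g s) (G1 s) (G2 s) <= 0 /\ 0 <= G1 s.
Proof.
  intros Hh s Hs Hsz g. pose proof (lh_z _ _ _ _ _ H) as Hz. pose proof (lh_p _ _ _ _ _ H) as Hp.
  pose proof (z_pos _ _ _ _ _ H) as Hz0.
  pose proof (hz_eq _ _ _ _ _ H _ Hh) as Hhz.
  assert (HL1z : 0 < L1 z) by (apply (L1_pos _ _ _ _ _ H); lra).
  assert (Ha : 0 < hz / L1 z) by (apply Rdiv_lt_0_compat; auto; rewrite Hhz; apply H1_pos; lra).
  set (a := hz / L1 z) in *.
  destruct (Rlt_or_le z s) as [Hzs|Hsz'].
  - exists z, 1, (fun y => a * L1 y), (fun y => a * L2 y).
    split; [lra|]. split; [lra|]. split; [lra|]. split; [lra|]. split.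
    + intros y Hy. split.
      * apply (dpl_ext (fun y => a * L y) g y _ (Rmin (y - z) (1 - y))). apply Rmin_pos; lra.
        intros y' Hy'. pose proof (Rmin_l (y - z) (1 - y)). apply abs_lt in Hy'.
        unfold g, gp. destruct (Rle_dec z y'); auto; lra.
        apply dpl_scal. apply (lh_d1 _ _ _ _ _ H); lra.
      * apply dpl_scal. apply (lh_d2 _ _ _ _ _ H); lra.
    + unfold g, gp. destruct (Rle_dec z s); [|lra].
      pose proof (lh_ode _ _ _ _ _ H s Hs) as Ho.
      pose proof (Q_neg _ _ _ _ _ H s ltac:(lra)) as Hq.
      pose proof (L1_pos _ _ _ _ _ H s ltac:(lra)).
      unfold Dop, Kop. split; [|split].
      * replace ((1 - s ^ 2) * (a * L2 s) - 2 * s * (a * L1 s) + p * (a * L s)) with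
          (a * ((1 - s ^ 2) * L2 s - 2 * s * L1 s + p * L s)) by ring. rewrite Ho. lra.
      * replace (p * (p - 1) * (a * L s) - 2 * (p - 1) * s * (a * L1 s) - (1 - s ^ 2) * (a * L2 s))
          with (a * p * (p * L s - 2 * s * L1 s) - a * ((1 - s ^ 2) * L2 s - 2 * s * L1 s + p * L s)) by ring.
        rewrite Ho. assert (0 < a * p) by nra. nra.
      * nra.
  - exists (-1), z, (hD1 p (cc z)), (hD2 p (cc z)).
    split; [lra|]. split; [lra|]. split; [lra|]. split; [lra|]. split.
    + intros y Hy. split.
      * apply (dpl_ext (hc p (cc z)) g y _ (z - y)). lra.
        intros y' Hy'. apply abs_lt in Hy'.
        unfold g, gp. destruct (Rle_dec z y'); auto; lra.
        apply hc_d1; lra.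
      * apply H1_d; lra.
    + unfold g, gp. destruct (Rle_dec z s); [lra|].
      rewrite Dh_eq, Kh_eq by lra. split; [|split]; [|lra|].
      * assert (Eh p (cc z) s <= 0).
        { assert (1 <= cc z) by (apply cc_ge1; lra).
          assert ((1 + s) / (1 - s) <= cc z).
          { unfold cc. apply (Rmult_le_reg_r ((1 - s) * (1 - z))). nra.
            replace ((1 + s) / (1 - s) * ((1 - s) * (1 - z))) with ((1 + s) * (1 - z)) by (field; lra).
            replace ((1 + z) / (1 - z) * ((1 - s) * (1 - z))) with ((1 + z) * (1 - s)) by (field; lra). nra. }
          apply Eh_neg_le; auto; lra. }
        assert (0 < p ^ 2 * ((1 + s) / 2) * ((1 - s) / 2)) by (apply Rmult_lt_0_compat; [apply Rmult_lt_0_compat|]; nra).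
        apply Rmult_le_0_l; lra.
      * left; apply H1_pos; lra.
Qed.

Lemma claim3 p z L L1 L2 (H : LH p z L L1 L2) hz :
  derivable_pt_lim (hc p (cc z)) z hz -> forall s, -1 < s < 1 -> s <> z ->
  let g := gp p (cc z) (hz / L1 z) z L in
  exists d1 d2, twice_deriv_at g s d1 d2 /\
       Dop p s (g s) d1 d2 <= 0 /\
       Dop p s (g s) d1 d2 / (1 - s ^ 2) + Kop p s (g s) d1 d2 <= 0.
Proof.
  intros Hh s Hs Hsz g.
  destruct (g_loc _ _ _ _ _ H hz Hh s Hs Hsz) as [lo [hi [G1 [G2 [A1 [A2 [A3 [A4 [A5 [A6 [A7 A8]]]]]]]]]]].
  fold g in A5, A6, A7.
  exists (G1 s), (G2 s). split; [|split]; auto.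
  - exists G1, (Rmin (s - lo) (hi - s)). split. apply Rmin_pos; lra. split.
    + intros y Hy. apply abs_lt in Hy. pose proof (Rmin_l (s - lo) (hi - s)). pose proof (Rmin_r (s - lo) (hi - s)).
      apply A5. lra.
    + split; auto. apply A5; lra.
  - assert (0 < 1 - s ^ 2) by nra.
    assert (Dop p s (g s) (G1 s) (G2 s) / (1 - s ^ 2) <= 0).
    { unfold Rdiv. apply Rmult_le_0_r; auto. left; apply Rinv_0_lt_compat; auto. }
    lra.
Qed.


Lemma dw_of_dpl (D : R -> Prop) f x l : derivable_pt_lim f x l -> deriv_within D f x l.
Proof.
  intros H eps He. destruct (H eps He) as [d Hd]. exists d. split. apply cond_pos.
  intros y Dy Hyx Hy. specialize (Hd (y - x)). replace (x + (y - x)) with y in Hd by ring.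
  apply Hd; auto. lra.
Qed.

Lemma cw_of_dpl (D : R -> Prop) f x l : derivable_pt_lim f x l -> cont_within D f x.
Proof.
  intros H eps He. destruct (dpl_cont f x l H eps He) as [d [Hd Hd']]. exists d; split; auto.
Qed.

Lemma dw_ext (D : R -> Prop) f g x l d : 0 < d -> (forall y, D y -> Rabs (y - x) < d -> f y = g y) -> f x = g x ->
  deriv_within D f x l -> deriv_within D g x l.
Proof.
  intros Hd Hfg Hx H eps He. destruct (H eps He) as [d1 [Hd1 Hd1']].
  exists (Rmin d d1). split. apply Rmin_pos; lra. intros y Dy Hyx Hy.
  pose proof (Rmin_l d d1). pose proof (Rmin_r d d1).
  rewrite <- Hx, <- Hfg; auto; try lra. apply Hd1'; auto; lra.
Qed.

Lemma cw_ext (D : R -> Prop) f g x d : 0 < d -> (forall y, D y -> Rabs (y - x) < d -> f y = g y) -> f x = g x ->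
  cont_within D f x -> cont_within D g x.
Proof.
  intros Hd Hfg Hx H eps He. destruct (H eps He) as [d1 [Hd1 Hd1']].
  exists (Rmin d d1). split. apply Rmin_pos; lra. intros y Dy Hy.
  pose proof (Rmin_l d d1). pose proof (Rmin_r d d1).
  rewrite <- Hx, <- Hfg; auto; try lra. apply Hd1'; auto; lra.
Qed.

Lemma dw_split (D : R -> Prop) f x l :
  deriv_within (fun y => D y /\ y <= x) f x l -> deriv_within (fun y => D y /\ x <= y) f x l ->
  deriv_within D f x l.
Proof.
  intros H1 H2 eps He. destruct (H1 eps He) as [d1 [Hd1 Hd1']]. destruct (H2 eps He) as [d2 [Hd2 Hd2']].
  exists (Rmin d1 d2). split. apply Rmin_pos; lra. intros y Dy Hyx Hy.
  pose proof (Rmin_l d1 d2). pose proof (Rmin_r d1 d2).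
  destruct (Rle_or_lt y x). apply Hd1'; [split; auto; lra| |]; auto; lra. apply Hd2'; [split; auto; lra| |]; auto; lra.
Qed.

Lemma cw_split (D : R -> Prop) f x :
  cont_within (fun y => D y /\ y <= x) f x -> cont_within (fun y => D y /\ x <= y) f x ->
  cont_within D f x.
Proof.
  intros H1 H2 eps He. destruct (H1 eps He) as [d1 [Hd1 Hd1']]. destruct (H2 eps He) as [d2 [Hd2 Hd2']].
  exists (Rmin d1 d2). split. apply Rmin_pos; lra. intros y Dy Hy.
  pose proof (Rmin_l d1 d2). pose proof (Rmin_r d1 d2).
  destruct (Rle_or_lt y x). apply Hd1'; [split; auto; lra|lra]. apply Hd2'; [split; auto; lra|lra].
Qed.

Lemma dw_sub (D D' : R -> Prop) f x l : (forall y, D' y -> D y) -> deriv_within D f x l -> deriv_within D' f x l.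
Proof.
  intros HD H eps He. destruct (H eps He) as [d [Hd Hd']]. exists d; split; auto.
Qed.
Lemma cw_sub (D D' : R -> Prop) f x : (forall y, D' y -> D y) -> cont_within D f x -> cont_within D' f x.
Proof.
  intros HD H eps He. destruct (H eps He) as [d [Hd Hd']]. exists d; split; auto.
Qed.

Definition Hpw p c x := p / 2 * pw ((1 + x) / 2) (p - 1) + pw c p * (p / 2) * pw ((1 - x) / 2) (p - 1).
Definition f1g p z (L1 : R -> R) a x :=
  if Rle_dec z x then (if Req_EM_T x 1 then a * (p / 2) else a * L1 x) else Hpw p (cc z) x.

Lemma Hpw_eq p c x : -1 < x < 1 -> Hpw p c x = hD1 p c x.
Proof. intros; unfold Hpw, hD1; rewrite (pw_pos ((1 + x) / 2)), (pw_pos ((1 - x) / 2)) by lra; auto. Qed.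

Lemma Hpw_m1 p c : Hpw p c (-1) = pw c p * (p / 2).
Proof.
  unfold Hpw. rewrite (pw_nonpos ((1 + -1) / 2)) by lra. rewrite (pw_pos ((1 - -1) / 2)) by lra.
  replace ((1 - -1) / 2) with 1 by field. rewrite Rpower_1base. ring.
Qed.

Lemma hc_m1 p c : hc p c (-1) = - pw c p.
Proof.
  unfold hc. rewrite (pw_nonpos ((1 + -1) / 2)) by lra. rewrite (pw_pos ((1 - -1) / 2)) by lra.
  replace ((1 - -1) / 2) with 1 by field. rewrite Rpower_1base. ring.
Qed.

Lemma Rpower_le_base x q : 0 < x <= 1 -> 1 <= q -> Rpower x q <= x.
Proof.
  intros Hx Hq. rewrite Rpower_sh by lra. assert (Rpower x (q - 1) <= 1) by (apply Rpower_le1; lra). nra.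
Qed.


Lemma dw_m1 p c : 2 < p -> 0 <= pw c p -> forall z, -1 < z < 1 ->
  deriv_within (fun y => -1 <= y <= 1) (fun y => if Rle_dec z y then 0 else hc p c y) (-1) (pw c p * (p / 2)).
Proof.
  intros Hp HK z Hz eps He.
  set (K := pw c p) in *.
  destruct (dpl_Rp_v p (-1) ltac:(lra) (eps / (2 * (K + 1)))) as [d1 Hd1].
  apply Rdiv_lt_0_compat; lra.
  pose proof (cond_pos d1).
  exists (Rmin (Rmin d1 eps) (z + 1)). split. apply Rmin_pos; [apply Rmin_pos|]; lra.
  intros y Dy Hyx Hy.
  pose proof (Rmin_l (Rmin d1 eps) (z + 1)). pose proof (Rmin_r (Rmin d1 eps) (z + 1)).
  pose proof (Rmin_l d1 eps). pose proof (Rmin_r d1 eps).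
  assert (Hy1 : -1 < y) by lra.
  rewrite Rabs_right in Hy by lra.
  destruct (Rle_dec z y); [lra|]. destruct (Rle_dec z (-1)); [lra|].
  apply Rnot_le_lt in n. assert (Hyy : -1 < y < 1) by lra. rewrite (hc_eq p c y Hyy). rewrite hc_m1. fold K.
  specialize (Hd1 (y + 1) ltac:(lra)). rewrite Rabs_right in Hd1 by lra. specialize (Hd1 ltac:(lra)).
  replace (-1 + (y + 1)) with y in Hd1 by ring. replace ((1 - -1) / 2) with 1 in Hd1 by field.
  rewrite !Rpower_1base in Hd1.
  replace ((Rpower ((1 + y) / 2) p - K * Rpower ((1 - y) / 2) p - - K) / (y - -1) - K * (p / 2))
    with (Rpower ((1 + y) / 2) p / (y + 1) - K * ((Rpower ((1 - y) / 2) p - 1) / (y + 1) - p * 1 * (-1 / 2)))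
    by (field; lra).
  apply abs_lt in Hd1.
  assert (A : 0 <= Rpower ((1 + y) / 2) p / (y + 1) <= eps / 4).
  { assert (Rpower ((1 + y) / 2) p <= (1 + y) / 2 * ((1 + y) / 2)).
    { rewrite Rpower_sh by lra. assert (Rpower ((1 + y) / 2) (p - 1) <= (1 + y) / 2) by (apply Rpower_le_base; lra).
      apply Rmult_le_compat_l; lra. }
    pose proof (Rpower_pos ((1 + y) / 2) p).
    split. unfold Rdiv; apply Rmult_le_pos; [lra|left; apply Rinv_0_lt_compat; lra].
    apply (Rmult_le_reg_r (y + 1)). lra. replace (Rpower ((1 + y) / 2) p / (y + 1) * (y + 1)) with (Rpower ((1 + y) / 2) p) by (field; lra).
    nra. }
  assert (B : Rabs (K * ((Rpower ((1 - y) / 2) p - 1) / (y + 1) - p * 1 * (-1 / 2))) <= eps / 2).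
  { rewrite Rabs_mult, Rabs_right by lra.
    assert (K * Rabs ((Rpower ((1 - y) / 2) p - 1) / (y + 1) - p * 1 * (-1 / 2)) <= (K + 1) * (eps / (2 * (K + 1)))).
    { apply Rmult_le_compat; try lra. apply Rabs_pos. left; apply abs_lt_i; lra. }
    assert ((K + 1) * (eps / (2 * (K + 1))) = eps / 2) by (field; lra). lra. }
  apply abs_le in B. apply abs_lt_i. lra.
Qed.

Lemma cw_m1 p c : 2 < p -> 0 <= pw c p -> forall z, -1 < z < 1 ->
  cont_within (fun y => -1 <= y <= 1) (fun y => if Rle_dec z y then 0 else Hpw p c y) (-1).
Proof.
  intros Hp HK z Hz eps He.
  set (K := pw c p) in *.
  destruct (dpl_cont _ _ _ (dpl_Rp_v (p - 1) (-1) ltac:(lra)) (eps / (p * (K + 1)))) as [d1 [Hd1 Hd1']].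
  apply Rdiv_lt_0_compat; nra.
  exists (Rmin (Rmin d1 (eps / p)) (z + 1)). split. apply Rmin_pos; [apply Rmin_pos|]; try lra. apply Rdiv_lt_0_compat; lra.
  intros y Dy Hy.
  pose proof (Rmin_l (Rmin d1 (eps / p)) (z + 1)). pose proof (Rmin_r (Rmin d1 (eps / p)) (z + 1)).
  pose proof (Rmin_l d1 (eps / p)). pose proof (Rmin_r d1 (eps / p)).
  destruct (Rle_dec z (-1)); [lra|].
  destruct (Req_dec y (-1)) as [->|Hy1].
  { destruct (Rle_dec z (-1)); [lra|]. replace (_ - _) with 0 by ring. rewrite Rabs_R0; lra. }
  rewrite Rabs_right in Hy by lra.
  destruct (Rle_dec z y); [lra|]. apply Rnot_le_lt in n0.
  rewrite Hpw_m1, Hpw_eq by lra. unfold hD1. fold K.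
  specialize (Hd1' y ltac:(apply abs_lt_i; lra)).
  replace ((1 - -1) / 2) with 1 in Hd1' by field. rewrite Rpower_1base in Hd1'.
  apply abs_lt in Hd1'.
  assert (A : 0 < Rpower ((1 + y) / 2) (p - 1) <= (1 + y) / 2).
  { split. apply Rpower_pos. apply Rpower_le_base; lra. }
  assert (A2 : p / 2 * Rpower ((1 + y) / 2) (p - 1) < eps / 2).
  { assert (p * (1 + y) < p * (eps / p)) by (apply Rmult_lt_compat_l; lra).
    assert (p * (eps / p) = eps) by (field; lra). nra. }
  assert (B : Rabs (K * (p / 2) * (Rpower ((1 - y) / 2) (p - 1) - 1)) <= eps / 2).
  { rewrite Rabs_mult. rewrite (Rabs_right (K * (p / 2))) by nra.
    assert (K * (p / 2) * Rabs (Rpower ((1 - y) / 2) (p - 1) - 1) <= (K + 1) * (p / 2) * (eps / (p * (K + 1)))).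
    { apply Rmult_le_compat; try nra. apply Rabs_pos. left; apply abs_lt_i; lra. }
    assert ((K + 1) * (p / 2) * (eps / (p * (K + 1))) = eps / 2) by (field; lra). lra. }
  apply abs_le in B. apply abs_lt_i. nra.
Qed.

Lemma f1g_lt p z L1 a y : y < z -> f1g p z L1 a y = Hpw p (cc z) y.
Proof. intros; unfold f1g; destruct (Rle_dec z y); auto; lra. Qed.
Lemma f1g_mid p z L1 a y : z <= y < 1 -> f1g p z L1 a y = a * L1 y.
Proof. intros; unfold f1g; destruct (Rle_dec z y); [|lra]. destruct (Req_EM_T y 1); auto; lra. Qed.
Lemma f1g_1 p z L1 a : z <= 1 -> f1g p z L1 a 1 = a * (p / 2).
Proof. intros; unfold f1g; destruct (Rle_dec z 1); [|lra]. destruct (Req_EM_T 1 1); auto; lra. Qed.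
Lemma g_lt p c a z L y : y < z -> gp p c a z L y = hc p c y.
Proof. intros; unfold gp; destruct (Rle_dec z y); auto; lra. Qed.
Lemma g_ge p c a z L y : z <= y -> gp p c a z L y = a * L y.
Proof. intros; unfold gp; destruct (Rle_dec z y); auto; lra. Qed.

Lemma claim1 p z L L1 L2 (H : LH p z L L1 L2) hz :
  derivable_pt_lim (hc p (cc z)) z hz ->
  C1_on (-1) 1 (gp p (cc z) (hz / L1 z) z L).
Proof.
  intros Hh. pose proof (lh_z _ _ _ _ _ H) as Hz. pose proof (lh_p _ _ _ _ _ H) as Hp.
  pose proof (z_pos _ _ _ _ _ H) as Hz0.
  pose proof (hz_eq _ _ _ _ _ H _ Hh) as Hhz.
  assert (HL1z : 0 < L1 z) by (apply (L1_pos _ _ _ _ _ H); lra).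
  assert (Ha : 0 < hz / L1 z) by (apply Rdiv_lt_0_compat; auto; rewrite Hhz; apply H1_pos; lra).
  assert (Haz : hz / L1 z * L1 z = hz) by (field; lra).
  set (a := hz / L1 z) in *.
  set (g := gp p (cc z) a z L).
  pose proof (pw_nonneg (cc z) p) as HK.
  set (D := fun y => -1 <= y <= 1).
  exists (f1g p z L1 a). split.
  - intros x Hx.
    destruct (Req_dec x (-1)) as [->|Hxm1].
    + rewrite f1g_lt, Hpw_m1 by lra.
      apply (dw_ext D (fun y => if Rle_dec z y then 0 else hc p (cc z) y) g (-1) _ (z + 1)). lra.
      intros y Dy Hy. apply abs_lt in Hy. unfold g. rewrite g_lt by lra. destruct (Rle_dec z y); auto; lra.
      unfold g. rewrite g_lt by lra. destruct (Rle_dec z (-1)); auto; lra.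
      apply dw_m1; lra.
    + destruct (Rlt_or_le x z) as [Hxz|Hzx].
      * rewrite f1g_lt, Hpw_eq by lra.
        apply (dw_ext D (hc p (cc z)) g x _ (Rmin (x + 1) (z - x))). apply Rmin_pos; lra.
        intros y Dy Hy. apply abs_lt in Hy. pose proof (Rmin_l (x + 1) (z - x)). pose proof (Rmin_r (x + 1) (z - x)).
        unfold g. rewrite g_lt by lra. auto.
        unfold g. rewrite g_lt by lra. auto.
        apply dw_of_dpl. apply hc_d1. lra.
      * destruct (Req_dec x z) as [->|Hxz].
        -- rewrite f1g_mid by lra. rewrite Haz. apply dw_split.
           ++ apply (dw_ext _ (hc p (cc z)) g z _ 1). lra.
              intros y [Dy Hy] _. unfold g. destruct (Req_dec y z) as [->|].
              rewrite g_ge by lra. rewrite (lh_Lz _ _ _ _ _ H). unfold cc; rewrite hc_z by lra. ring.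
              rewrite g_lt by lra. auto.
              unfold g. rewrite g_ge by lra. rewrite (lh_Lz _ _ _ _ _ H). unfold cc; rewrite hc_z by lra. ring.
              apply dw_of_dpl. exact Hh.
           ++ apply (dw_ext _ (fun y => a * L y) g z _ 1). lra.
              intros y [Dy Hy] _. unfold g. rewrite g_ge by lra. auto.
              unfold g. rewrite g_ge by lra. auto.
              apply dw_of_dpl. rewrite <- Haz. apply dpl_scal. apply (lh_d1 _ _ _ _ _ H). lra.
        -- destruct (Req_dec x 1) as [->|Hx1].
           ++ rewrite f1g_1 by lra.
              intros eps He. destruct (L_left_deriv _ _ _ _ _ H (eps / (2 * a))) as [d [Hd Hd']].
              apply Rdiv_lt_0_compat; lra.
              exists (Rmin d (1 - z)). split. apply Rmin_pos; lra.
              intros y Dy Hy1 Hy. pose proof (Rmin_l d (1 - z)). pose proof (Rmin_r d (1 - z)).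
              unfold D in Dy. apply abs_lt in Hy.
              unfold g. rewrite !g_ge by lra. rewrite (lh_1 _ _ _ _ _ H).
              specialize (Hd' y ltac:(lra)).
              replace ((a * L y - a * 1) / (y - 1) - a * (p / 2)) with (a * ((L y - 1) / (y - 1) - p / 2)) by (field; lra).
              rewrite Rabs_mult, Rabs_right by lra.
              assert (a * Rabs ((L y - 1) / (y - 1) - p / 2) <= a * (eps / (2 * a))) by (apply Rmult_le_compat_l; lra).
              assert (a * (eps / (2 * a)) = eps / 2) by (field; lra). lra.
           ++ rewrite f1g_mid by lra.
              apply (dw_ext D (fun y => a * L y) g x _ (Rmin (x - z) (1 - x))). apply Rmin_pos; lra.
              intros y Dy Hy. apply abs_lt in Hy. pose proof (Rmin_l (x - z) (1 - x)). pose proof (Rmin_r (x - z) (1 - x)).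
              unfold g. rewrite g_ge by lra. auto.
              unfold g. rewrite g_ge by lra. auto.
              apply dw_of_dpl. apply dpl_scal. apply (lh_d1 _ _ _ _ _ H). lra.
  - intros x Hx.
    destruct (Req_dec x (-1)) as [->|Hxm1].
    + apply (cw_ext D (fun y => if Rle_dec z y then 0 else Hpw p (cc z) y) _ (-1) (z + 1)). lra.
      intros y Dy Hy. apply abs_lt in Hy. rewrite f1g_lt by lra. destruct (Rle_dec z y); auto; lra.
      rewrite f1g_lt by lra. destruct (Rle_dec z (-1)); auto; lra.
      apply cw_m1; lra.
    + destruct (Rlt_or_le x z) as [Hxz|Hzx].
      * apply (cw_ext D (hD1 p (cc z)) _ x (Rmin (x + 1) (z - x))). apply Rmin_pos; lra.
        intros y Dy Hy. apply abs_lt in Hy. pose proof (Rmin_l (x + 1) (z - x)). pose proof (Rmin_r (x + 1) (z - x)).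
        rewrite f1g_lt, Hpw_eq by lra. auto.
        rewrite f1g_lt, Hpw_eq by lra. auto.
        eapply cw_of_dpl. apply H1_d. lra.
      * destruct (Req_dec x z) as [->|Hxz].
        -- apply cw_split.
           ++ apply (cw_ext _ (hD1 p (cc z)) _ z (z + 1)). lra.
              intros y [Dy Hy] Hy'. apply abs_lt in Hy'. destruct (Req_dec y z) as [->|].
              rewrite f1g_mid by lra. rewrite Haz. auto.
              rewrite f1g_lt, Hpw_eq by lra. auto.
              rewrite f1g_mid by lra. rewrite Haz. auto.
              eapply cw_of_dpl. apply H1_d. lra.
           ++ apply (cw_ext _ (fun y => a * L1 y) _ z (1 - z)). lra.
              intros y [Dy Hy] Hy'. apply abs_lt in Hy'. rewrite f1g_mid by lra. auto.
              rewrite f1g_mid by lra. auto.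
              eapply cw_of_dpl. apply dpl_scal. apply (lh_d2 _ _ _ _ _ H). lra.
        -- destruct (Req_dec x 1) as [->|Hx1].
           ++ intros eps He. destruct (L1_lim _ _ _ _ _ H (eps / (2 * a))) as [d [Hd Hd']].
              apply Rdiv_lt_0_compat; lra.
              exists (Rmin d (1 - z)). split. apply Rmin_pos; lra.
              intros y Dy Hy. pose proof (Rmin_l d (1 - z)). pose proof (Rmin_r d (1 - z)).
              unfold D in Dy. apply abs_lt in Hy. rewrite f1g_1 by lra.
              destruct (Req_dec y 1) as [->|Hy1].
              rewrite f1g_1 by lra. replace (_ - _) with 0 by ring. rewrite Rabs_R0; lra.
              rewrite f1g_mid by lra.
              specialize (Hd' y ltac:(lra)).
              replace (a * L1 y - a * (p / 2)) with (a * (L1 y - p / 2)) by ring.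
              rewrite Rabs_mult, Rabs_right by lra.
              assert (a * Rabs (L1 y - p / 2) <= a * (eps / (2 * a))) by (apply Rmult_le_compat_l; lra).
              assert (a * (eps / (2 * a)) = eps / 2) by (field; lra). lra.
           ++ apply (cw_ext D (fun y => a * L1 y) _ x (Rmin (x - z) (1 - x))). apply Rmin_pos; lra.
              intros y Dy Hy. apply abs_lt in Hy. pose proof (Rmin_l (x - z) (1 - x)). pose proof (Rmin_r (x - z) (1 - x)).
              rewrite f1g_mid by lra. auto.
              rewrite f1g_mid by lra. auto.
              eapply cw_of_dpl. apply dpl_scal. apply (lh_d2 _ _ _ _ _ H). lra.
Qed.


Lemma pw_mul_div r y p : 0 < r -> 0 <= y -> pw r p * pw (y / r) p = pw y p.
Proof.
  intros Hr Hy. destruct (Req_dec y 0) as [->|Hy0].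
  - rewrite (pw_nonpos 0) by lra. rewrite (pw_nonpos (0 / r)) by (unfold Rdiv; rewrite Rmult_0_l; lra). ring.
  - assert (0 < y / r) by (apply Rdiv_lt_0_compat; lra).
    rewrite (pw_pos r), (pw_pos (y / r)), (pw_pos y) by lra. rewrite Rpower_mult_distr by lra. f_equal. field; lra.
Qed.

Lemma claim4 p z L L1 L2 (H : LH p z L L1 L2) hz :
  derivable_pt_lim (hc p (cc z)) z hz ->
  forall x y, 0 <= x -> 0 <= y -> (x, y) <> (0, 0) ->
  phi p (gp p (cc z) (hz / L1 z) z L) x y >= pw y p - pw (cc z) p * pw x p.
Proof.
  intros Hh x y Hx Hy Hxy.
  assert (Hr : 0 < x + y).
  { destruct (Req_dec x 0) as [->|]; [destruct (Req_dec y 0) as [->|]|]; try lra. exfalso; apply Hxy; auto. }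
  unfold phi. set (s := (y - x) / (x + y)).
  assert (Hs : -1 <= s <= 1).
  { unfold s. split; apply (Rmult_le_reg_r (x + y)); auto; field_simplify; lra. }
  pose proof (claim2 _ _ _ _ _ H hz Hh s Hs) as Hg.
  pose proof (pw_nonneg (x + y) p).
  assert (pw (x + y) p * gp p (cc z) (hz / L1 z) z L s >= pw (x + y) p * hc p (cc z) s) by nra.
  assert (E : pw (x + y) p * hc p (cc z) s = pw y p - pw (cc z) p * pw x p).
  { unfold hc. replace ((1 + s) / 2) with (y / (x + y)) by (unfold s; field; lra).
    replace ((1 - s) / 2) with (x / (x + y)) by (unfold s; field; lra).
    rewrite <- (pw_mul_div (x + y) y p), <- (pw_mul_div (x + y) x p) by lra. ring. }
  lra.
Qed.


Lemma L_Rp_a q b a : 0 < a + b -> derivable_pt_lim (fun t => Rpower (t + b) q) a (q * Rpower (a + b) (q - 1)).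
Proof.
  intros H. eapply dpl_eq. apply (dpl_comp (fun u => Rpower u q) (fun t => t + b)).
  apply dpl_add. apply dpl_id. apply dpl_const. apply derivable_pt_lim_power. auto. ring.
Qed.
Lemma L_Rp_b q a b : 0 < a + b -> derivable_pt_lim (fun t => Rpower (a + t) q) b (q * Rpower (a + b) (q - 1)).
Proof.
  intros H. eapply dpl_eq. apply (dpl_comp (fun u => Rpower u q) (fun t => a + t)).
  apply dpl_add. apply dpl_const. apply dpl_id. apply derivable_pt_lim_power. auto. ring.
Qed.
Lemma L_S_a b a : 0 < a + b -> derivable_pt_lim (fun t => (b - t) / (t + b)) a (-2 * b / (a + b) ^ 2).
Proof.
  intros H. eapply dpl_eq. apply (derivable_pt_lim_div (fun t => b - t) (fun t => t + b)).
  apply dpl_sub. apply dpl_const. apply dpl_id. apply dpl_add. apply dpl_id. apply dpl_const. lra.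
  unfold Rsqr. field. lra.
Qed.
Lemma L_S_b a b : 0 < a + b -> derivable_pt_lim (fun t => (t - a) / (a + t)) b (2 * a / (a + b) ^ 2).
Proof.
  intros H. eapply dpl_eq. apply (derivable_pt_lim_div (fun t => t - a) (fun t => a + t)).
  apply dpl_sub. apply dpl_id. apply dpl_const. apply dpl_add. apply dpl_const. apply dpl_id. lra.
  unfold Rsqr. field. lra.
Qed.
Lemma L_inv2_a c b a : 0 < a + b -> derivable_pt_lim (fun t => c / (t + b) ^ 2) a (-2 * c / (a + b) ^ 3).
Proof.
  intros H. eapply dpl_eq. apply (derivable_pt_lim_div (fun t => c) (fun t => (t + b) ^ 2)).
  apply dpl_const. apply (dpl_comp (fun u => u ^ 2) (fun t => t + b)). apply dpl_add. apply dpl_id. apply dpl_const.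
  apply dpl_sq. apply pow_nonzero. lra.
  unfold Rsqr. field. lra.
Qed.
Lemma L_inv2_b c a b : 0 < a + b -> derivable_pt_lim (fun t => c / (a + t) ^ 2) b (-2 * c / (a + b) ^ 3).
Proof.
  intros H. eapply dpl_eq. apply (derivable_pt_lim_div (fun t => c) (fun t => (a + t) ^ 2)).
  apply dpl_const. apply (dpl_comp (fun u => u ^ 2) (fun t => a + t)). apply dpl_add. apply dpl_const. apply dpl_id.
  apply dpl_sq. apply pow_nonzero. lra.
  unfold Rsqr. field. lra.
Qed.
Lemma L_w_b a b : 0 < a + b -> derivable_pt_lim (fun t => -2 * t / (a + t) ^ 2) b ((2 * b - 2 * a) / (a + b) ^ 3).
Proof.
  intros H. eapply dpl_eq. apply (derivable_pt_lim_div (fun t => -2 * t) (fun t => (a + t) ^ 2)).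
  apply dpl_scal. apply dpl_id. apply (dpl_comp (fun u => u ^ 2) (fun t => a + t)). apply dpl_add. apply dpl_const. apply dpl_id.
  apply dpl_sq. apply pow_nonzero. lra.
  unfold Rsqr. field. lra.
Qed.

Lemma quad_le A B C h1 h2 k1 k2 R0 K X Y : 0 < R0 -> K <= 0 -> X <= 0 -> X + Y <= 0 ->
  A = R0 * (K + X) -> B = R0 * K -> C = R0 * (K + Y) -> k1 ^ 2 + k2 ^ 2 <= h1 ^ 2 + h2 ^ 2 ->
  A * (h1 ^ 2 + h2 ^ 2) + 2 * B * (h1 * k1 + h2 * k2) + C * (k1 ^ 2 + k2 ^ 2) <= 0.
Proof.
  intros HR HK HX HXY -> -> -> Hk.
  replace (R0 * (K + X) * (h1 ^ 2 + h2 ^ 2) + 2 * (R0 * K) * (h1 * k1 + h2 * k2) + R0 * (K + Y) * (k1 ^ 2 + k2 ^ 2))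
    with (R0 * (K * ((h1 + k1) ^ 2 + (h2 + k2) ^ 2) + (X * (h1 ^ 2 + h2 ^ 2) + Y * (k1 ^ 2 + k2 ^ 2)))) by ring.
  apply Rmult_le_0_l. lra.
  assert (K * ((h1 + k1) ^ 2 + (h2 + k2) ^ 2) <= 0) by (apply Rmult_le_0_r; [lra|]; apply Rplus_le_le_0_compat; apply pow2_ge_0).
  assert (X * (h1 ^ 2 + h2 ^ 2) + Y * (k1 ^ 2 + k2 ^ 2) <= 0).
  { destruct (Rle_or_lt 0 Y).
    - assert (Y * (k1 ^ 2 + k2 ^ 2) <= Y * (h1 ^ 2 + h2 ^ 2)) by (apply Rmult_le_compat_l; lra).
      assert ((X + Y) * (h1 ^ 2 + h2 ^ 2) <= 0) by (apply Rmult_le_0_r; nra). nra.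
    - assert (Y * (k1 ^ 2 + k2 ^ 2) <= 0) by (apply Rmult_le_0_r; nra).
      assert (X * (h1 ^ 2 + h2 ^ 2) <= 0) by (apply Rmult_le_0_r; nra). lra. }
  lra.
Qed.

Lemma S_close x y a b d eta : 0 < x -> 0 < y -> 0 < eta -> 0 < d -> d <= x / 2 -> d <= y / 2 -> d <= eta * (x + y) / 4 ->
  Rabs (a - x) < d -> Rabs (b - y) < d ->
  0 < a /\ 0 < b /\ Rabs ((b - a) / (a + b) - (y - x) / (x + y)) < eta.
Proof.
  intros Hx Hy He Hd H1 H2 H3 Ha Hb. apply abs_lt in Ha. apply abs_lt in Hb.
  assert (0 < a) by lra. assert (0 < b) by lra. split; auto. split; auto.
  replace ((b - a) / (a + b) - (y - x) / (x + y)) with (2 * (x * (b - y) - y * (a - x)) / ((a + b) * (x + y))) by (field; lra).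
  assert (Hab : (x + y) / 2 < a + b) by lra.
  assert (HN : Rabs (x * (b - y) - y * (a - x)) < (x + y) * d).
  { apply abs_lt_i. split; nra. }
  assert (0 < (a + b) * (x + y)) by nra.
  unfold Rdiv. rewrite Rabs_mult, Rabs_mult, (Rabs_right 2) by lra.
  rewrite Rabs_inv, (Rabs_right ((a + b) * (x + y))) by lra.
  apply (Rmult_lt_reg_r ((a + b) * (x + y))). auto.
  rewrite Rmult_assoc, Rinv_l by lra.
  assert (eta * ((x + y) / 2 * (x + y)) < eta * ((a + b) * (x + y))).
  { apply Rmult_lt_compat_l; auto. apply Rmult_lt_compat_r; lra. }
  assert (2 * ((x + y) * d) <= eta * ((x + y) / 2 * (x + y))).
  { assert (2 * ((x + y) * d) <= 2 * ((x + y) * (eta * (x + y) / 4))) by (apply Rmult_le_compat_l; [lra|]; apply Rmult_le_compat_l; lra).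
    lra. }
  lra.
Qed.

Definition pxf p (g G1 : R -> R) a b :=
  p * Rpower (a + b) (p - 1) * g ((b - a) / (a + b)) + Rpower (a + b) p * (G1 ((b - a) / (a + b)) * (-2 * b / (a + b) ^ 2)).
Definition pyf p (g G1 : R -> R) a b :=
  p * Rpower (a + b) (p - 1) * g ((b - a) / (a + b)) + Rpower (a + b) p * (G1 ((b - a) / (a + b)) * (2 * a / (a + b) ^ 2)).

Lemma claim5_gen p (g G1 G2 : R -> R) lo hi x y : 2 < p -> 0 < x -> 0 < y ->
  lo < (y - x) / (x + y) < hi ->
  (forall w, lo < w < hi -> derivable_pt_lim g w (G1 w) /\ derivable_pt_lim G1 w (G2 w)) ->
  let s := (y - x) / (x + y) in
  Dop p s (g s) (G1 s) (G2 s) <= 0 -> Kop p s (g s) (G1 s) (G2 s) <= 0 -> 0 <= G1 s ->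
  exists fx fy fxx fxy fyy,
    second_partials (phi p g) x y fx fy fxx fxy fyy /\
    forall h1 h2 k1 k2 : R,
      k1 ^ 2 + k2 ^ 2 <= h1 ^ 2 + h2 ^ 2 ->
      (fx / x + fxx) * (h1 ^ 2 + h2 ^ 2) + 2 * fxy * (h1 * k1 + h2 * k2)
        + (fyy + fy / y) * (k1 ^ 2 + k2 ^ 2) <= 0.
Proof.
  intros Hp Hx Hy Hs Hd s HD HK HG1.
  set (eta := Rmin (s - lo) (hi - s)).
  assert (Heta : 0 < eta) by (apply Rmin_pos; unfold s; lra).
  set (d := Rmin (Rmin (x / 2) (y / 2)) (eta * (x + y) / 4)).
  assert (Hdp : 0 < d) by (apply Rmin_pos; [apply Rmin_pos|]; try lra; apply Rmult_lt_0_compat; [apply Rmult_lt_0_compat|]; lra).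
  assert (Hd1 : d <= x / 2) by (unfold d; eapply Rle_trans; [apply Rmin_l|apply Rmin_l]).
  assert (Hd2 : d <= y / 2) by (unfold d; eapply Rle_trans; [apply Rmin_l|apply Rmin_r]).
  assert (Hd3 : d <= eta * (x + y) / 4) by (unfold d; apply Rmin_r).
  assert (Hnb : forall a b, Rabs (a - x) < d -> Rabs (b - y) < d ->
     0 < a /\ 0 < b /\ lo < (b - a) / (a + b) < hi).
  { intros a b Ha Hb. destruct (S_close x y a b d eta) as [A1 [A2 A3]]; auto.
    pose proof (Rmin_l (s - lo) (hi - s)). pose proof (Rmin_r (s - lo) (hi - s)).
    apply abs_lt in A3. fold s in A3. fold eta in H, H0. repeat split; auto; lra. }
  assert (Hxy : 0 < x + y) by lra.
  assert (Hs' : lo < s < hi) by (unfold s; lra).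
  destruct (Hd s Hs') as [Dg DG1].
  do 5 eexists. split.
  - exists (pxf p g G1), (pyf p g G1), d. split; auto. split; [|split; [reflexivity|split; [reflexivity|]]].
    + intros a b Ha Hb. destruct (Hnb a b Ha Hb) as [Ha0 [Hb0 HS]].
      destruct (Hd _ HS) as [Dga _]. split.
      * apply (dpl_ext (fun t => Rpower (t + b) p * g ((b - t) / (t + b))) _ _ _ (a + b)). lra.
        intros t Ht. apply abs_lt in Ht. unfold phi. rewrite pw_pos by lra. auto.
        eapply dpl_eq. apply (dpl_mul (fun t => Rpower (t + b) p) (fun t => g ((b - t) / (t + b)))).
        apply L_Rp_a; lra. apply (dpl_comp g (fun t => (b - t) / (t + b))). apply L_S_a; lra. exact Dga.
        unfold pxf. ring.
      * apply (dpl_ext (fun t => Rpower (a + t) p * g ((t - a) / (a + t))) _ _ _ (a + b)). lra.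
        intros t Ht. apply abs_lt in Ht. unfold phi. rewrite pw_pos by lra. auto.
        eapply dpl_eq. apply (dpl_mul (fun t => Rpower (a + t) p) (fun t => g ((t - a) / (a + t)))).
        apply L_Rp_b; lra. apply (dpl_comp g (fun t => (t - a) / (a + t))). apply L_S_b; lra. exact Dga.
        unfold pyf. ring.
    + split; [|split].
      * unfold pxf. eapply dpl_eq.
        apply (dpl_add (fun t => p * Rpower (t + y) (p - 1) * g ((y - t) / (t + y)))
                       (fun t => Rpower (t + y) p * (G1 ((y - t) / (t + y)) * (-2 * y / (t + y) ^ 2)))).
        apply (dpl_mul (fun t => p * Rpower (t + y) (p - 1)) (fun t => g ((y - t) / (t + y)))).
        apply dpl_scal. apply L_Rp_a; lra.
        apply (dpl_comp g (fun t => (y - t) / (t + y))). apply L_S_a; lra. exact Dg.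
        apply (dpl_mul (fun t => Rpower (t + y) p) (fun t => G1 ((y - t) / (t + y)) * (-2 * y / (t + y) ^ 2))).
        apply L_Rp_a; lra.
        apply (dpl_mul (fun t => G1 ((y - t) / (t + y))) (fun t => -2 * y / (t + y) ^ 2)).
        apply (dpl_comp G1 (fun t => (y - t) / (t + y))). apply L_S_a; lra. exact DG1.
        apply L_inv2_a; lra.
        reflexivity.
      * unfold pxf. eapply dpl_eq.
        apply (dpl_add (fun t => p * Rpower (x + t) (p - 1) * g ((t - x) / (x + t)))
                       (fun t => Rpower (x + t) p * (G1 ((t - x) / (x + t)) * (-2 * t / (x + t) ^ 2)))).
        apply (dpl_mul (fun t => p * Rpower (x + t) (p - 1)) (fun t => g ((t - x) / (x + t)))).
        apply dpl_scal. apply L_Rp_b; lra.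
        apply (dpl_comp g (fun t => (t - x) / (x + t))). apply L_S_b; lra. exact Dg.
        apply (dpl_mul (fun t => Rpower (x + t) p) (fun t => G1 ((t - x) / (x + t)) * (-2 * t / (x + t) ^ 2))).
        apply L_Rp_b; lra.
        apply (dpl_mul (fun t => G1 ((t - x) / (x + t))) (fun t => -2 * t / (x + t) ^ 2)).
        apply (dpl_comp G1 (fun t => (t - x) / (x + t))). apply L_S_b; lra. exact DG1.
        apply L_w_b; lra.
        reflexivity.
      * unfold pyf. eapply dpl_eq.
        apply (dpl_add (fun t => p * Rpower (x + t) (p - 1) * g ((t - x) / (x + t)))
                       (fun t => Rpower (x + t) p * (G1 ((t - x) / (x + t)) * (2 * x / (x + t) ^ 2)))).
        apply (dpl_mul (fun t => p * Rpower (x + t) (p - 1)) (fun t => g ((t - x) / (x + t)))).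
        apply dpl_scal. apply L_Rp_b; lra.
        apply (dpl_comp g (fun t => (t - x) / (x + t))). apply L_S_b; lra. exact Dg.
        apply (dpl_mul (fun t => Rpower (x + t) p) (fun t => G1 ((t - x) / (x + t)) * (2 * x / (x + t) ^ 2))).
        apply L_Rp_b; lra.
        apply (dpl_mul (fun t => G1 ((t - x) / (x + t))) (fun t => 2 * x / (x + t) ^ 2)).
        apply (dpl_comp G1 (fun t => (t - x) / (x + t))). apply L_S_b; lra. exact DG1.
        apply L_inv2_b; lra.
        reflexivity.
  - intros h1 h2 k1 k2 Hk. cbv beta. unfold pxf, pyf. fold s.
    rewrite (Rpower_sh (x + y) p), (Rpower_sh (x + y) (p - 1)) by lra.
    pose proof (Rpower_pos (x + y) (p - 1 - 1)) as HR0.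
    set (R0 := Rpower (x + y) (p - 1 - 1)) in *.
    set (D0 := Dop p s (g s) (G1 s) (G2 s)) in *.
    set (K0 := Kop p s (g s) (G1 s) (G2 s)) in *.
    apply (quad_le _ _ _ h1 h2 k1 k2 R0 K0 (D0 / (x / (x + y)) - 2 * p * G1 s) (D0 / (y / (x + y)) + 2 * p * G1 s)); auto.
    + assert (D0 / (x / (x + y)) <= 0).
      { unfold Rdiv. apply Rmult_le_0_r; auto. left; apply Rinv_0_lt_compat; apply Rdiv_lt_0_compat; lra. }
      nra.
    + assert (D0 / (x / (x + y)) <= 0).
      { unfold Rdiv. apply Rmult_le_0_r; auto. left; apply Rinv_0_lt_compat; apply Rdiv_lt_0_compat; lra. }
      assert (D0 / (y / (x + y)) <= 0).
      { unfold Rdiv. apply Rmult_le_0_r; auto. left; apply Rinv_0_lt_compat; apply Rdiv_lt_0_compat; lra. }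
      lra.
    + unfold K0, D0, Kop, Dop, s. field. lra.
    + unfold K0, Kop, s. field. lra.
    + unfold K0, D0, Kop, Dop, s. field. lra.
Qed.


Theorem mainTheorem10
  (alpha p : R) (L L1 L2 : R -> R) (z hz : R)
  (Hp : p = alpha * (alpha + 1)) (Hp2 : 2 < p)
  (* L = L_alpha: solution on (-1,1) of the Legendre equation, L1 = L', L2 = L'' *)
  (HL1 : forall s, -1 < s < 1 -> derivable_pt_lim L s (L1 s))
  (HL2 : forall s, -1 < s < 1 -> derivable_pt_lim L1 s (L2 s))
  (HODE : forall s, -1 < s < 1 ->
            (1 - s ^ 2) * L2 s - 2 * s * L1 s + alpha * (alpha + 1) * L s = 0)
  (* bounded near 1, with L(1) = 1 (as the value of the continuous extension) *)
  (Hbdd : exists M delta, 0 < delta /\ forall s, 1 - delta < s < 1 -> Rabs (L s) <= M)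
  (Hlim : forall eps, 0 < eps -> exists delta, 0 < delta /\
            forall s, 1 - delta < s < 1 -> Rabs (L s - 1) < eps)
  (HL1eq : L 1 = 1)
  (* z = z_p: the largest zero of L in (-1,1) *)
  (Hz : -1 < z < 1) (HLz : L z = 0)
  (Hzmax : forall s, z < s < 1 -> L s <> 0)
  (* hz = h_{c_p}'(z_p) *)
  (Hhz : derivable_pt_lim (hc p ((1 + z) / (1 - z))) z hz) :
  let c := (1 + z) / (1 - z) in
  let a := hz / L1 z in
  let g := gp p c a z L in
  C1_on (-1) 1 g /\
  (forall s, -1 <= s <= 1 -> g s >= hc p c s) /\
  (forall s, -1 < s < 1 -> s <> z ->
     exists d1 d2, twice_deriv_at g s d1 d2 /\
       Dop p s (g s) d1 d2 <= 0 /\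
       Dop p s (g s) d1 d2 / (1 - s ^ 2) + Kop p s (g s) d1 d2 <= 0) /\
  (forall x y, 0 <= x -> 0 <= y -> (x, y) <> (0, 0) ->
     phi p g x y >= pw y p - pw c p * pw x p) /\
  (forall x y, 0 < x -> 0 < y -> (y - x) / (x + y) <> z ->
     exists fx fy fxx fxy fyy,
       second_partials (phi p g) x y fx fy fxx fxy fyy /\
       forall h1 h2 k1 k2 : R,
         k1 ^ 2 + k2 ^ 2 <= h1 ^ 2 + h2 ^ 2 ->
         (fx / x + fxx) * (h1 ^ 2 + h2 ^ 2) + 2 * fxy * (h1 * k1 + h2 * k2)
           + (fyy + fy / y) * (k1 ^ 2 + k2 ^ 2) <= 0).
Proof.
  intros c a g.
  assert (H : LH p z L L1 L2).
  { constructor; auto. intros s Hs. rewrite Hp. apply HODE; auto. }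
  change (derivable_pt_lim (hc p (cc z)) z hz) in Hhz.
  split; [|split; [|split; [|split]]].
  - exact (claim1 _ _ _ _ _ H hz Hhz).
  - exact (claim2 _ _ _ _ _ H hz Hhz).
  - exact (claim3 _ _ _ _ _ H hz Hhz).
  - exact (claim4 _ _ _ _ _ H hz Hhz).
  - intros x y Hx Hy Hsz.
    assert (Hs : -1 < (y - x) / (x + y) < 1).
    { split; apply (Rmult_lt_reg_r (x + y)); try lra; field_simplify; lra. }
    destruct (g_loc _ _ _ _ _ H hz Hhz _ Hs Hsz) as [lo [hi [G1 [G2 [A1 [A2 [A3 [A4 [A5 [A6 [A7 A8]]]]]]]]]]].
    apply (claim5_gen p g G1 G2 lo hi x y); auto; lra.
Qed.
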